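(* Let $m\in\mathbb{N}_+$, $p=\frac{2m}{2m-1}$, $\phi\in C^\infty([0,1];\mathbb{R})$ and $0<d_1\le d_2$. For $\gamma,R>0$ set $Q(t,x)=2\gamma R^p\big(\frac xR+\phi(t)\big)^2$ for $(t,x)\in[0,1]\times\mathbb{R}$. There exist $\gamma_0,R_0,C>0$ such that for all $\gamma\ge\gamma_0$, $R\ge R_0$, and all $u\in C_c^\infty((0,1)\times\mathbb{R};\mathbb{C})$ satisfying $d_1\le\big|\frac xR+\phi(t)\big|\le d_2$ on $\mathrm{supp}\,u$, $$\iint e^{Q}\big|D_tu+D_x^{2m}u\big|^2\,dx\,dt\ \ge\ C\gamma^{4m-1}R^p\iint e^{Q}|u|^2\,dx\,dt.$$
   Context: $D_t=i^{-1}\partial_t$, $D_x=i^{-1}\partial_x$; integrals are over $(0,1)\times\mathbb{R}$. *)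

(* Defs.v *)
From Stdlib Require Import Reals Lra Lia ClassicalEpsilon.
Open Scope R_scope.

(* Riemann integral of f over [a,b] (value of RiemannInt when integrable;
   chosen by Hilbert's epsilon, so no proof object appears in statements). *)
Definition RInt (f : R -> R) (a b : R) : R :=
  epsilon (inhabits 0)
    (fun v => exists pr : Riemann_integrable f a b, RiemannInt pr = v).

Definition RInt_line (f : R -> R) : R :=
  epsilon (inhabits 0)
    (fun v => forall eps, eps > 0 -> exists M0, forall M, M >= M0 ->
       Rabs (RInt f (- M) M - v) < eps).

Definition iint (F : R -> R -> R) : R :=
  RInt (fun t => RInt_line (fun x => F t x)) 0 1.

Definition cont2 (f : R -> R -> R) : Prop :=
  forall t x eps, eps > 0 -> exists delta, delta > 0 /\
    forall t' x', Rabs (t' - t) < delta -> Rabs (x' - x) < delta ->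
      Rabs (f t' x' - f t x) < eps.

(* D is the family of all mixed partial derivatives of a C^oo function
   f = D 0 0 on R^2 : D i j = d_t^i d_x^j f, all existing and continuous. *)
Definition smooth_family (D : nat -> nat -> R -> R -> R) : Prop :=
  (forall i j t x, derivable_pt_lim (fun s => D i j s x) t (D (S i) j t x)) /\
  (forall i j t x, derivable_pt_lim (fun y => D i j t y) x (D i (S j) t x)) /\
  (forall i j, cont2 (D i j)).

Definition deriv_within01 (f : R -> R) (x l : R) : Prop :=
  limit1_in (fun y => (f y - f x) / (y - x))
            (fun y => 0 <= y <= 1 /\ y <> x) l x.

Definition smooth01 (phi : R -> R) : Prop :=
  exists D : nat -> R -> R,
    (forall x, 0 <= x <= 1 -> D 0%nat x = phi x) /\
    (forall n x, 0 <= x <= 1 -> deriv_within01 (D n) x (D (S n) x)).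

(* (t,x) lies in the support (closure of the nonzero set) of u = ur + i ui. *)
Definition in_supp (ur ui : R -> R -> R) (t x : R) : Prop :=
  forall eps, eps > 0 -> exists t' x',
    Rabs (t' - t) < eps /\ Rabs (x' - x) < eps /\
    (ur t' x' <> 0 \/ ui t' x' <> 0).

Definition compact_supp_strip (ur ui : R -> R -> R) : Prop :=
  exists a b L, 0 < a /\ b < 1 /\
    forall t x, in_supp ur ui t x -> a <= t <= b /\ Rabs x <= L.

(* Real / imaginary parts of D_t u + D_x^{2m} u, where D = i^{-1} d,
   u = Ur 0 0 + i Ui 0 0:  D_t u = d_t Ui - i d_t Ur,
   D_x^{2m} u = (-1)^m d_x^{2m} u. *)
Definition Pu_re (m : nat) (Ur Ui : nat -> nat -> R -> R -> R) (t x : R) : R :=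
  Ui 1%nat 0%nat t x + (-1) ^ m * Ur 0%nat (2 * m)%nat t x.
Definition Pu_im (m : nat) (Ur Ui : nat -> nat -> R -> R -> R) (t x : R) : R :=
  - Ur 1%nat 0%nat t x + (-1) ^ m * Ui 0%nat (2 * m)%nat t x.

Definition pexp (m : nat) : R := 2 * INR m / (2 * INR m - 1).

Definition Qw (m : nat) (phi : R -> R) (g Rr t x : R) : R :=
  2 * g * Rpower Rr (pexp m) * (x / Rr + phi t) ^ 2.

(* Main.v *)
Require Import Defs.
From Stdlib Require Import Reals Lra Lia ClassicalEpsilon Classical FunctionalExtensionality.
From Coquelicot Require Import Coquelicot.
Open Scope R_scope.

Definition cts (f : R -> R) := forall x, continuity_pt f x.

Lemma cts_plus f g : cts f -> cts g -> cts (fun x => f x + g x).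
Proof. intros Hf Hg x. apply (continuity_pt_plus f g x (Hf x) (Hg x)). Qed.
Lemma cts_mult f g : cts f -> cts g -> cts (fun x => f x * g x).
Proof. intros Hf Hg x. apply (continuity_pt_mult f g x (Hf x) (Hg x)). Qed.
Lemma cts_const c : cts (fun _ => c).
Proof. intros x. apply (continuity_pt_const (fun _ => c)). intros a b; reflexivity. Qed.
Lemma cts_id : cts (fun x => x).
Proof. intros x. apply continuity_pt_id. Qed.
Lemma cts_exp f : cts f -> cts (fun x => exp (f x)).
Proof. intros Hf x. apply (continuity_pt_comp f exp x (Hf x)). apply derivable_continuous_pt.
  exists (exp (f x)). apply derivable_pt_lim_exp. Qed.
Lemma cts_opp f : cts f -> cts (fun x => - f x).
Proof. intros Hf x. apply (continuity_pt_opp f x (Hf x)). Qed.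
Lemma cts_minus f g : cts f -> cts g -> cts (fun x => f x - g x).
Proof. intros Hf Hg x. apply (continuity_pt_minus f g x (Hf x) (Hg x)). Qed.
Lemma cts_ext f g : (forall x, f x = g x) -> cts f -> cts g.
Proof. intros E Hf x. assert (g = f) by (apply FunctionalExtensionality.functional_extensionality; intro; rewrite E; auto). subst; auto. Qed.
Lemma cts_pow f n : cts f -> cts (fun x => f x ^ n).
Proof. intros Hf; induction n. simpl. apply cts_const. simpl. apply cts_mult; auto. Qed.

Lemma cts_exRInt f a b : cts f -> ex_RInt f a b.
Proof. intros Hf. apply (ex_RInt_continuous (V:=R_CompleteNormedModule)). intros z _. apply continuity_pt_filterlim. apply Hf. Qed.

Lemma dpl_cts f f' : (forall x, derivable_pt_lim f x (f' x)) -> cts f.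
Proof. intros H x. apply derivable_continuous_pt. exists (f' x). apply H. Qed.

Lemma RInt_plus' f g a b : ex_RInt f a b -> ex_RInt g a b ->
  RInt (fun x => f x + g x) a b = RInt f a b + RInt g a b.
Proof. intros. apply (RInt_plus f g a b); auto. Qed.
Lemma RInt_scal' f a b c : ex_RInt f a b ->
  RInt (fun x => c * f x) a b = c * RInt f a b.
Proof. intros. apply (RInt_scal f a b c); auto. Qed.
Lemma RInt_minus' f g a b : ex_RInt f a b -> ex_RInt g a b ->
  RInt (fun x => f x - g x) a b = RInt f a b - RInt g a b.
Proof. intros. apply (RInt_minus f g a b); auto. Qed.

Lemma D_mult f g x a b : derivable_pt_lim f x a -> derivable_pt_lim g x b ->
  derivable_pt_lim (fun y => f y * g y) x (a * g x + f x * b).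
Proof. intros; apply (derivable_pt_lim_mult f g x a b); auto. Qed.
Lemma D_plus f g x a b : derivable_pt_lim f x a -> derivable_pt_lim g x b ->
  derivable_pt_lim (fun y => f y + g y) x (a + b).
Proof. intros; apply (derivable_pt_lim_plus f g x a b); auto. Qed.
Lemma D_minus f g x a b : derivable_pt_lim f x a -> derivable_pt_lim g x b ->
  derivable_pt_lim (fun y => f y - g y) x (a - b).
Proof. intros; apply (derivable_pt_lim_minus f g x a b); auto. Qed.
Lemma D_const c x : derivable_pt_lim (fun _ => c) x 0.
Proof. apply (derivable_pt_lim_const c x). Qed.
Lemma D_id x : derivable_pt_lim (fun y => y) x 1.
Proof. apply (derivable_pt_lim_id x). Qed.
Lemma D_exp f x a : derivable_pt_lim f x a -> derivable_pt_lim (fun y => exp (f y)) x (exp (f x) * a).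
Proof. intros H. pose proof (derivable_pt_lim_comp f exp x a (exp (f x)) H (derivable_pt_lim_exp (f x))).
  unfold comp in H0. exact H0. Qed.
Lemma D_ext f g x l l' : (forall y, f y = g y) -> l = l' -> derivable_pt_lim f x l -> derivable_pt_lim g x l'.
Proof. intros E El H. assert (g = f) by (apply FunctionalExtensionality.functional_extensionality; intro; rewrite E; auto). subst; auto. Qed.
Lemma D_scal c f x a : derivable_pt_lim f x a -> derivable_pt_lim (fun y => c * f y) x (c * a).
Proof. intros H. apply (derivable_pt_lim_scal f c x a H). Qed.
Lemma RInt_ext' (f g : R -> R) a b : (forall x, Rmin a b < x < Rmax a b -> f x = g x) ->
  RInt f a b = RInt g a b.
Proof. intros H. apply RInt_ext. exact H. Qed.

Definition Fam := nat -> R -> R.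
Definition lam (a s x : R) := a * (x + s).
Definition wt (a s x : R) := exp (a * (x + s) ^ 2).
Definition Tf (a s : R) (F : Fam) : Fam := fun j x =>
  F (S j) x + 2 * lam a s x * F j x + 2 * INR j * a * F (pred j) x.
Fixpoint Tp (a s : R) (k : nat) (F : Fam) : Fam :=
  match k with O => F | S k' => Tf a s (Tp a s k' F) end.
Definition Sh (F : Fam) : Fam := fun j x => F (S j) x.
Fixpoint Shn (k : nat) (F : Fam) : Fam :=
  match k with O => F | S k' => Sh (Shn k' F) end.
Definition Fadd (F G : Fam) : Fam := fun j x => F j x + G j x.
Definition Fscal (c : R) (F : Fam) : Fam := fun j x => c * F j x.
Definition ip (a s K : R) (F G : Fam) : R :=
  RInt (fun x => wt a s x * (F 0%nat x * G 0%nat x)) (-K) K.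
Definition Good (s K r : R) (F : Fam) : Prop :=
  (forall j x, derivable_pt_lim (F j) x (F (S j) x)) /\
  (forall j x, K <= Rabs x -> F j x = 0) /\
  (forall j x, Rabs (x + s) < r -> F j x = 0).

Lemma wt_deriv a s x : derivable_pt_lim (wt a s) x (wt a s x * (2 * lam a s x)).
Proof.
  unfold wt, lam. apply (D_exp (fun y => a * (y + s) ^ 2)).
  apply (D_ext (fun y => a * ((y + s) * (y + s))) _ x (a * ((1 + 0) * (x + s) + (x + s) * (1 + 0)))).
  intros; ring. ring.
  apply D_scal. assert (Hp := D_plus (fun y => y) (fun _ => s) x _ _ (D_id x) (D_const s x)). apply (D_mult (fun y => y + s) (fun y => y + s)); exact Hp.
Qed.

Lemma wt_cts a s : cts (wt a s).
Proof. apply (dpl_cts _ _ (wt_deriv a s)). Qed.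
Lemma wt_pos a s x : 0 < wt a s x.
Proof. apply exp_pos. Qed.
Lemma lam_cts a s : cts (lam a s).
Proof. unfold lam. apply cts_mult. apply cts_const. apply cts_plus. apply cts_id. apply cts_const. Qed.

Lemma Good_cts s K r F j : Good s K r F -> cts (F j).
Proof. intros [H _]. apply (dpl_cts _ _ (H j)). Qed.

Lemma Good_Sh s K r F : Good s K r F -> Good s K r (Sh F).
Proof. intros [H1 [H2 H3]]; unfold Sh; repeat split; intros; auto. Qed.

Lemma Good_Shn s K r k F : Good s K r F -> Good s K r (Shn k F).
Proof. induction k; simpl; intros; auto. apply Good_Sh; auto. Qed.

Lemma Good_add s K r F G : Good s K r F -> Good s K r G -> Good s K r (Fadd F G).
Proof. intros [H1 [H2 H3]] [G1 [G2 G3]]; unfold Fadd; repeat split; intros.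
  apply D_plus; auto. rewrite H2, G2; auto; ring. rewrite H3, G3; auto; ring. Qed.

Lemma Good_scal s K r c F : Good s K r F -> Good s K r (Fscal c F).
Proof. intros [H1 [H2 H3]]; unfold Fscal; repeat split; intros.
  apply D_scal; auto. rewrite H2; auto; ring. rewrite H3; auto; ring. Qed.

Lemma lam_deriv a s x : derivable_pt_lim (lam a s) x a.
Proof. unfold lam. apply (D_ext (fun y => a * (y + s)) _ x (a * (1 + 0))); [intros; ring| ring|].
  apply D_scal. exact (D_plus (fun y => y) (fun _ => s) x _ _ (D_id x) (D_const s x)). Qed.

Lemma Tf_deriv a s F j x : (forall j x, derivable_pt_lim (F j) x (F (S j) x)) ->
  derivable_pt_lim (Tf a s F j) x (Tf a s F (S j) x).
Proof. intros H1. unfold Tf.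
  assert (A := H1 (S j) x).
  assert (B := D_mult (fun y => 2 * lam a s y) (F j) x _ _ (D_scal 2 _ x _ (lam_deriv a s x)) (H1 j x)).
  assert (C := D_scal (2 * INR j * a) _ x _ (H1 (pred j) x)).
  assert (D := D_plus _ _ x _ _ (D_plus _ _ x _ _ A B) C).
  eapply D_ext; [| | exact D]. intros y; reflexivity.
  cbv beta. destruct j.
  - simpl pred. simpl INR. ring.
  - simpl pred. rewrite !S_INR. ring.
Qed.

Lemma Good_Tf a s K r F : Good s K r F -> Good s K r (Tf a s F).
Proof. intros [H1 [H2 H3]]; repeat split; intros.
  - apply Tf_deriv; auto.
  - unfold Tf; rewrite !H2; auto; ring.
  - unfold Tf; rewrite !H3; auto; ring.
Qed.

Lemma Good_Tp a s K r k F : Good s K r F -> Good s K r (Tp a s k F).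
Proof. induction k; simpl; intros; auto. apply Good_Tf; auto. Qed.

Lemma ip_ex a s K r F G : Good s K r F -> Good s K r G ->
  ex_RInt (fun x => wt a s x * (F 0%nat x * G 0%nat x)) (-K) K.
Proof. intros HF HG. apply cts_exRInt. apply cts_mult. apply wt_cts.
  apply cts_mult; eapply Good_cts; eauto. Qed.

Lemma ip_sym a s K F G : ip a s K F G = ip a s K G F.
Proof. unfold ip. apply RInt_ext'. intros ? _; ring. Qed.

Lemma ip_ext a s K F F' G : (forall x, F 0%nat x = F' 0%nat x) -> ip a s K F G = ip a s K F' G.
Proof. intros E; unfold ip. apply RInt_ext'. intros ? _; rewrite E; ring. Qed.

Lemma ip_add a s K r F G H : Good s K r F -> Good s K r G -> Good s K r H ->
  ip a s K (Fadd F G) H = ip a s K F H + ip a s K G H.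
Proof. intros. unfold ip, Fadd. rewrite <- RInt_plus'. apply RInt_ext'; intros ? _; ring.
  eapply ip_ex; eauto. eapply ip_ex; eauto. Qed.

Lemma ip_scal a s K r F G c : Good s K r F -> Good s K r G -> ip a s K (Fscal c F) G = c * ip a s K F G.
Proof. intros. unfold ip, Fscal. rewrite <- RInt_scal'. apply RInt_ext'; intros ? _. ring.
  eapply ip_ex; eauto. Qed.

Lemma RInt_zero a b : RInt (fun _ => 0) a b = 0.
Proof. rewrite RInt_const. unfold scal; simpl. unfold mult; simpl. ring. Qed.

Lemma RInt_ge0 f a b : a <= b -> ex_RInt f a b -> (forall x, a < x < b -> 0 <= f x) -> 0 <= RInt f a b.
Proof. intros Hab Hf Hp. rewrite <- (RInt_zero a b). apply RInt_le; auto.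
  apply (ex_RInt_const a b (0:R)). Qed.

Lemma ip_nonneg a s K r F : 0 < K -> Good s K r F -> 0 <= ip a s K F F.
Proof. intros HK HF. unfold ip. apply RInt_ge0. lra. eapply ip_ex; eauto.
  intros x _. apply Rmult_le_pos. left; apply wt_pos. apply Rle_0_sqr. Qed.

Lemma is_RInt_der0 (h h' : R -> R) K : (forall x, derivable_pt_lim h x (h' x)) -> cts h' ->
  h K = 0 -> h (-K) = 0 -> RInt h' (-K) K = 0.
Proof. intros Hd Hc H1 H2. apply is_RInt_unique.
  replace 0 with (minus (h K) (h (-K))). apply (is_RInt_derive (V:=R_CompleteNormedModule)).
  intros x _. apply is_derive_Reals. auto.
  intros x _. apply continuity_pt_filterlim. auto.
  rewrite H1, H2. unfold minus, plus, opp; simpl. ring. Qed.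

Lemma ibp a s K r F G : 0 < K -> Good s K r F -> Good s K r G ->
  ip a s K (Sh F) G = - ip a s K F (Tf a s G).
Proof. intros HK HF HG.
  destruct HF as [F1 [F2 F3]]. destruct HG as [G1 [G2 G3]].
  set (h := fun x => wt a s x * (F 0%nat x * G 0%nat x)).
  set (h' := fun x => wt a s x * (Sh F 0%nat x * G 0%nat x) + wt a s x * (F 0%nat x * Tf a s G 0%nat x)).
  assert (E : RInt h' (-K) K = 0).
  { apply (is_RInt_der0 h). intros x. unfold h, h'.
    assert (D := D_mult _ _ x _ _ (wt_deriv a s x) (D_mult _ _ x _ _ (F1 0%nat x) (G1 0%nat x))).
    eapply D_ext; [|  | exact D]. intros; reflexivity. unfold Sh, Tf. simpl pred. simpl INR. ring.
    unfold h'. apply cts_plus; apply cts_mult; try apply wt_cts; apply cts_mult.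
    apply (dpl_cts _ _ (F1 1%nat)). apply (dpl_cts _ _ (G1 0%nat)).
    apply (dpl_cts _ _ (F1 0%nat)). apply (Good_cts s K r _ 0%nat (Good_Tf a s K r G (conj G1 (conj G2 G3)))).
    unfold h. rewrite F2. ring. rewrite Rabs_right; lra.
    unfold h. rewrite F2. ring. rewrite Rabs_left; lra. }
  unfold h' in E. rewrite RInt_plus' in E. unfold ip. lra.
  apply (ip_ex a s K r (Sh F) G). apply Good_Sh; repeat split; auto. repeat split; auto.
  apply (ip_ex a s K r F (Tf a s G)). repeat split; auto. apply Good_Tf; repeat split; auto.
Qed.

Definition FEq (F G : Fam) := forall j x, F j x = G j x.

Lemma Tf_ext a s F G : FEq F G -> FEq (Tf a s F) (Tf a s G).
Proof. intros E j x; unfold Tf; rewrite !E; auto. Qed.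
Lemma Sh_ext F G : FEq F G -> FEq (Sh F) (Sh G).
Proof. intros E j x; unfold Sh; rewrite !E; auto. Qed.
Lemma Tp_ext a s k F G : FEq F G -> FEq (Tp a s k F) (Tp a s k G).
Proof. induction k; simpl; intros; auto. apply Tf_ext; auto. Qed.
Lemma Tf_add a s F G : FEq (Tf a s (Fadd F G)) (Fadd (Tf a s F) (Tf a s G)).
Proof. intros j x; unfold Tf, Fadd; ring. Qed.
Lemma Tf_scal a s c F : FEq (Tf a s (Fscal c F)) (Fscal c (Tf a s F)).
Proof. intros j x; unfold Tf, Fscal; ring. Qed.
Lemma Tf_Sh a s F : FEq (Tf a s (Sh F)) (Fadd (Sh (Tf a s F)) (Fscal (-2 * a) F)).
Proof. intros j x; unfold Tf, Sh, Fadd, Fscal. simpl pred. destruct j; simpl pred.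
  simpl INR; ring. rewrite !S_INR. ring. Qed.
Lemma Tp_Tf a s k F : FEq (Tp a s k (Tf a s F)) (Tf a s (Tp a s k F)).
Proof. induction k; simpl; intros j x; auto. apply Tf_ext. auto. Qed.

Lemma Tp_Sh a s k F : FEq (Tp a s k (Sh F))
  (Fadd (Sh (Tp a s k F)) (Fscal (-2 * a * INR k) (Tp a s (pred k) F))).
Proof. induction k; intros j x.
  - simpl. unfold Fadd, Fscal. ring.
  - simpl Tp. rewrite (Tf_ext a s _ _ IHk). rewrite Tf_add. unfold Fadd at 1.
    rewrite Tf_Sh. rewrite Tf_scal. unfold Fadd, Fscal.
    destruct k.
    + simpl. ring.
    + simpl pred. simpl Tp. rewrite (S_INR (S k)). ring.
Qed.

Lemma Shn_eq k F j x : Shn k F j x = F (k + j)%nat x.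
Proof. revert j; induction k; intros j; simpl; auto. unfold Sh. rewrite IHk. f_equal; lia. Qed.

Lemma ip_FEq a s K F F' G G' : FEq F F' -> FEq G G' -> ip a s K F G = ip a s K F' G'.
Proof. intros E1 E2; unfold ip. apply RInt_ext'. intros; rewrite E1, E2; auto. Qed.

Definition Lm (a s : R) (F : Fam) : Fam := fun j x => lam a s x * F j x + INR j * a * F (pred j) x.

Lemma Good_Lm a s K r F : Good s K r F -> Good s K r (Lm a s F).
Proof. intros [H1 [H2 H3]]; repeat split; intros; unfold Lm.
  - assert (B := D_mult _ _ x _ _ (lam_deriv a s x) (H1 j x)).
    assert (C := D_scal (INR j * a) _ x _ (H1 (pred j) x)).
    assert (D := D_plus _ _ x _ _ B C).
    eapply D_ext; [| | exact D]. intros; reflexivity.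
    cbv beta. destruct j; simpl pred. simpl INR; ring. rewrite !S_INR; ring.
  - rewrite !H2; auto; ring.
  - rewrite !H3; auto; ring.
Qed.

Lemma ip_add_r a s K r F G H : Good s K r F -> Good s K r G -> Good s K r H ->
  ip a s K F (Fadd G H) = ip a s K F G + ip a s K F H.
Proof. intros. rewrite ip_sym, (ip_add a s K r); auto. rewrite (ip_sym _ _ _ G), (ip_sym _ _ _ H). auto. Qed.
Lemma ip_scal_r a s K r F G c : Good s K r F -> Good s K r G ->
  ip a s K F (Fscal c G) = c * ip a s K F G.
Proof. intros. rewrite ip_sym, (ip_scal a s K r); auto. rewrite ip_sym; auto. Qed.

Lemma N_expand a s K r X Y c : Good s K r X -> Good s K r Y ->
  ip a s K (Fadd X (Fscal c Y)) (Fadd X (Fscal c Y)) =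
  ip a s K X X + 2 * c * ip a s K X Y + c ^ 2 * ip a s K Y Y.
Proof. intros HX HY.
  assert (HcY := Good_scal s K r c Y HY).
  rewrite (ip_add a s K r); auto. 2: apply Good_add; auto.
  rewrite !(ip_add_r a s K r); auto.
  rewrite !(ip_scal a s K r); auto. rewrite !(ip_scal_r a s K r); auto.
  rewrite (ip_sym _ _ _ Y X). ring. Qed.

Lemma N_Sh a s K r F : 0 < K -> Good s K r F ->
  ip a s K (Sh F) (Sh F) = ip a s K (Tf a s F) (Tf a s F) + 2 * a * ip a s K F F.
Proof. intros HK HF.
  assert (HS := Good_Sh s K r F HF). assert (HT := Good_Tf a s K r F HF).
  rewrite (ibp a s K r F (Sh F)); auto.
  rewrite (ip_FEq a s K F F _ _ (fun _ _ => eq_refl) (Tf_Sh a s F)).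
  rewrite (ip_add_r a s K r); auto. 2: apply Good_Sh; auto. 2: apply Good_scal; auto.
  rewrite (ip_scal_r a s K r); auto.
  rewrite (ip_sym _ _ _ F (Sh _)). rewrite (ibp a s K r); auto. ring. Qed.

Lemma N_TpSh a s K r F k : 0 < K -> Good s K r F ->
  ip a s K (Tp a s k (Sh F)) (Tp a s k (Sh F)) =
  ip a s K (Tp a s (S k) F) (Tp a s (S k) F) + 2 * a * (1 + 2 * INR k) * ip a s K (Tp a s k F) (Tp a s k F)
  + 4 * a ^ 2 * INR k ^ 2 * ip a s K (Tp a s (pred k) F) (Tp a s (pred k) F).
Proof. intros HK HF.
  assert (Hk := Good_Tp a s K r k F HF). assert (Hpk := Good_Tp a s K r (pred k) F HF).
  rewrite (ip_FEq a s K _ _ _ _ (Tp_Sh a s k F) (Tp_Sh a s k F)).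
  rewrite (N_expand a s K r); auto. 2: apply Good_Sh; auto.
  rewrite (N_Sh a s K r); auto. simpl Tp.
  rewrite (ibp a s K r); auto.
  destruct k.
  - simpl. ring.
  - simpl pred. simpl Tp. rewrite S_INR. ring.
Qed.

Lemma N_nn a s K r F : 0 < K -> Good s K r F -> 0 <= ip a s K F F.
Proof. intros; eapply ip_nonneg; eauto. Qed.

Lemma N_Shn_ge a s K r k : 0 < K -> 0 < a -> forall F, Good s K r F ->
  ip a s K (Shn (S k) F) (Shn (S k) F) >=
  ip a s K (Tp a s (S k) F) (Tp a s (S k) F) + 2 * a * INR (S k) ^ 2 * ip a s K (Tp a s k F) (Tp a s k F).
Proof. intros HK Ha. induction k; intros F HF.
  - simpl Shn. rewrite (N_Sh a s K r); auto. simpl. lra.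
  - assert (E : FEq (Shn (S (S k)) F) (Shn (S k) (Sh F))).
    { intros j x. rewrite !Shn_eq. unfold Sh. f_equal; lia. }
    rewrite (ip_FEq a s K _ _ _ _ E E).
    assert (HS := Good_Sh s K r F HF).
    specialize (IHk (Sh F) HS).
    rewrite (N_TpSh a s K r F (S k)) in IHk; auto.
    assert (H2 := N_TpSh a s K r F k HK HF).
    assert (n1 := N_nn a s K r (Tp a s (S k) F) HK (Good_Tp a s K r _ _ HF)).
    assert (n2 := N_nn a s K r (Tp a s k F) HK (Good_Tp a s K r _ _ HF)).
    assert (n3 := N_nn a s K r (Tp a s (pred k) F) HK (Good_Tp a s K r _ _ HF)).
    assert (n4 := N_nn a s K r (Tp a s (pred (S k)) F) HK (Good_Tp a s K r _ _ HF)).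
    assert (n5 := N_nn a s K r (Tp a s (S (S k)) F) HK (Good_Tp a s K r _ _ HF)).
    assert (hk : 0 <= INR k) by apply pos_INR.
    set (A := ip a s K (Tp a s k (Sh F)) (Tp a s k (Sh F))) in *.
    assert (A >= ip a s K (Tp a s (S k) F) (Tp a s (S k) F)).
    { rewrite H2. assert (0 <= 2 * a * (1 + 2 * INR k) * ip a s K (Tp a s k F) (Tp a s k F)).
      { apply Rmult_le_pos; auto. nra. }
      assert (0 <= 4 * a ^ 2 * INR k ^ 2 * ip a s K (Tp a s (pred k) F) (Tp a s (pred k) F)).
      { apply Rmult_le_pos; auto. nra. } lra. }
    rewrite !S_INR in *. 
    set (B := ip a s K (Tp a s (S k) F) (Tp a s (S k) F)) in *.
    assert (0 <= 4 * a ^ 2 * (INR k + 1) ^ 2 * ip a s K (Tp a s (pred (S k)) F) (Tp a s (pred (S k)) F)).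
    { apply Rmult_le_pos; auto. nra. }
    assert (2 * a * (INR k + 1) ^ 2 * A >= 2 * a * (INR k + 1) ^ 2 * B).
    { apply Rle_ge, Rmult_le_compat_l. nra. lra. }
    nra.
Qed.

Lemma ip_Lm a s K F G : ip a s K F (Lm a s G) = ip a s K (Lm a s F) G.
Proof. unfold ip, Lm. apply RInt_ext'. intros. simpl INR. ring. Qed.

Lemma N_Tf_ge a s K r F : 0 < K -> 0 < a -> 0 <= r -> Good s K r F ->
  ip a s K (Tf a s F) (Tf a s F) >= (a ^ 2 * r ^ 2 - a) * ip a s K F F.
Proof. intros HK Ha Hr HF.
  assert (HL := Good_Lm a s K r F HF). assert (HS := Good_Sh s K r F HF).
  assert (E : FEq (Tf a s F) (Fadd (Fadd (Sh F) (Lm a s F)) (Fscal 1 (Lm a s F)))).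
  { intros j x; unfold Tf, Fadd, Fscal, Sh, Lm. ring. }
  rewrite (ip_FEq a s K _ _ _ _ E E).
  rewrite (N_expand a s K r); auto. 2: apply Good_add; auto.
  rewrite (ip_add a s K r (Sh F) (Lm a s F) (Lm a s F)); auto.
  assert (X : ip a s K (Sh F) (Lm a s F) = - (a * ip a s K F F + 2 * ip a s K (Lm a s F) (Lm a s F)) / 2).
  { assert (E2 := ibp a s K r F (Lm a s F) HK HF HL).
    rewrite (ip_sym a s K F (Tf a s (Lm a s F))) in E2.
    rewrite (ip_ext a s K (Tf a s (Lm a s F)) (Fadd (Fadd (Lm a s (Sh F)) (Fscal a F)) (Fscal 2 (Lm a s (Lm a s F))))) in E2.
    2: { intros x; unfold Tf, Fadd, Fscal, Lm, Sh. simpl. ring. }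
    rewrite (ip_add a s K r) in E2; auto. rewrite (ip_add a s K r) in E2; auto.
    rewrite !(ip_scal a s K r) in E2; auto.
    rewrite <- !ip_Lm in E2. rewrite (ip_Lm a s K F (Lm a s F)) in E2. lra.
    all: repeat first [apply Good_Lm | apply Good_Sh | apply Good_add | apply Good_scal]; auto. }
  rewrite X.
  assert (NL : ip a s K (Lm a s F) (Lm a s F) >= a ^ 2 * r ^ 2 * ip a s K F F).
  { unfold ip. rewrite <- RInt_scal'. apply Rle_ge. apply RInt_le. lra.
    apply cts_exRInt. apply cts_mult. apply cts_const. apply cts_mult. apply wt_cts. apply cts_mult; apply (Good_cts s K r F 0%nat HF).
    apply cts_exRInt. apply cts_mult. apply wt_cts. apply cts_mult; apply (Good_cts s K r _ 0%nat HL).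
    intros x _. unfold Lm, lam. simpl INR.
    destruct (Rlt_or_le (Rabs (x + s)) r) as [Hlt|Hge].
    - destruct HF as [_ [_ H3]]. rewrite H3; auto. nra.
    - assert (r ^ 2 <= (x + s) ^ 2). { destruct (Rcase_abs (x + s)) as [h|h]; [rewrite Rabs_left in Hge|rewrite Rabs_right in Hge]; auto; nra. }
      assert (0 < wt a s x) by apply wt_pos.
      assert (0 <= F 0%nat x ^ 2) by nra.
      assert (h1 : a ^ 2 * r ^ 2 * F 0%nat x ^ 2 <= a ^ 2 * (x + s) ^ 2 * F 0%nat x ^ 2).
      { apply Rmult_le_compat_r; auto. apply Rmult_le_compat_l; auto. nra. }
      assert (h2 := Rmult_le_compat_l (wt a s x) _ _ (Rlt_le _ _ H0) h1).
      replace (0 * a * F (pred 0) x) with 0 by ring. nra.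
    - eapply ip_ex; eauto. }
  assert (n1 := N_nn a s K r (Fadd (Sh F) (Lm a s F)) HK (Good_add _ _ _ _ _ HS HL)).
  lra.
  all: first [apply (Good_Tp a s K r k) | apply (Good_Shn s K r k)]; auto.
Qed.

Lemma N_Tp_ge a s K r k F : 0 < K -> 0 < a -> 0 <= r -> 0 <= a ^ 2 * r ^ 2 - a -> Good s K r F ->
  ip a s K (Tp a s k F) (Tp a s k F) >= (a ^ 2 * r ^ 2 - a) ^ k * ip a s K F F.
Proof. intros HK Ha Hr Hrho HF. induction k.
  - simpl. lra.
  - simpl Tp. assert (H := N_Tf_ge a s K r (Tp a s k F) HK Ha Hr (Good_Tp a s K r k F HF)).
    rewrite <- tech_pow_Rmult. assert (0 <= ip a s K F F) by (eapply N_nn; eauto).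
    assert ((a ^ 2 * r ^ 2 - a) * ip a s K (Tp a s k F) (Tp a s k F) >=
            (a ^ 2 * r ^ 2 - a) * ((a ^ 2 * r ^ 2 - a) ^ k * ip a s K F F)).
    { apply Rle_ge, Rmult_le_compat_l; lra. }
    rewrite Rmult_assoc. lra.
Qed.

Lemma adj a s K r n : 0 < K -> forall F G, Good s K r F -> Good s K r G ->
  ip a s K (Shn n F) G = (-1) ^ n * ip a s K F (Tp a s n G).
Proof. intros HK. induction n; intros F G HF HG.
  - simpl; ring.
  - simpl Shn. rewrite (ibp a s K r); auto. 2: apply Good_Shn; auto.
    rewrite IHn; auto. 2: apply Good_Tf; auto.
    rewrite (ip_FEq a s K F F _ _ (fun _ _ => eq_refl) (Tp_Tf a s n G)). simpl. ring.
Qed.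

Lemma cross a s K r n F G : 0 < K -> Good s K r F -> Good s K r G ->
  ip a s K (Sh G) (Shn n F) =
  (-1) ^ n * (- ip a s K (Tf a s F) (Tp a s n G) - 2 * a * INR n * ip a s K F (Tp a s (pred n) G)).
Proof. intros HK HF HG.
  rewrite ip_sym. rewrite (adj a s K r); auto. 2: apply Good_Sh; auto.
  rewrite (ip_FEq a s K F F _ _ (fun _ _ => eq_refl) (Tp_Sh a s n G)).
  assert (H1 := Good_Tp a s K r n G HG). assert (H2 := Good_Tp a s K r (pred n) G HG).
  rewrite (ip_add_r a s K r); auto. 2: apply Good_Sh; auto. 2: apply Good_scal; auto.
  rewrite (ip_scal_r a s K r); auto.
  rewrite (ip_sym _ _ _ F (Sh _)), (ibp a s K r); auto. rewrite (ip_sym _ _ _ (Tp a s n G)). ring.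
Qed.

Lemma N_two a s K r Y Z al be : Good s K r Y -> Good s K r Z ->
  ip a s K (Fadd (Fscal al Y) (Fscal be Z)) (Fadd (Fscal al Y) (Fscal be Z)) =
  al ^ 2 * ip a s K Y Y + 2 * al * be * ip a s K Y Z + be ^ 2 * ip a s K Z Z.
Proof. intros HY HZ.
  assert (H1 := Good_scal s K r al Y HY). assert (H2 := Good_scal s K r be Z HZ).
  rewrite (ip_add a s K r); auto. 2: apply Good_add; auto.
  rewrite !(ip_add_r a s K r); auto.
  rewrite !(ip_scal a s K r); auto. rewrite !(ip_scal_r a s K r); auto.
  rewrite (ip_sym _ _ _ Z Y). ring. Qed.

Definition alpha (a s : R) (c sg : R) (n : nat) (f g : Fam) : Fam :=
  Fadd (Fscal c (Sh g)) (Fscal sg (Shn n f)).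
Definition beta (a s : R) (c sg : R) (n : nat) (f g : Fam) : Fam :=
  Fadd (Fscal c (Tf a s g)) (Fscal sg (Tp a s n f)).
Definition Delta (a s K c sg : R) (n : nat) (f g : Fam) : R :=
  ip a s K (alpha a s c sg n f g) (alpha a s c sg n f g)
  - ip a s K (beta a s c sg n f g) (beta a s c sg n f g)
  + ip a s K (alpha a s (-c) sg n g f) (alpha a s (-c) sg n g f)
  - ip a s K (beta a s (-c) sg n g f) (beta a s (-c) sg n g f).

Lemma Delta_ge a s K r c sg k f g : 0 < K -> 0 < a -> 0 <= r -> sg ^ 2 = 1 ->
  (-1) ^ (S k) = 1 ->
  0 <= a ^ 2 * r ^ 2 - a -> (a ^ 2 * r ^ 2 - a) ^ k >= 4 * c ^ 2 ->
  Good s K r f -> Good s K r g ->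
  Delta a s K c sg (S k) f g >= a / 2 * (a ^ 2 * r ^ 2 - a) ^ k * (ip a s K f f + ip a s K g g).
Proof. intros HK Ha Hr Hsg Hev Hrho Hc Hf Hg.
  set (rho := a ^ 2 * r ^ 2 - a) in *.
  unfold Delta, alpha, beta.
  rewrite !(N_two a s K r); try (apply Good_Sh || apply Good_Shn || apply Good_Tf || apply Good_Tp); auto.
  rewrite (cross a s K r (S k) f g); auto. rewrite (cross a s K r (S k) g f); auto.
  rewrite Hev. rewrite !(N_Sh a s K r); auto. simpl pred.
  assert (Nf := N_Shn_ge a s K r k HK Ha f Hf). assert (Ng := N_Shn_ge a s K r k HK Ha g Hg).
  set (Xf := Tp a s k f) in *. set (Xg := Tp a s k g) in *.
  assert (Gf : Good s K r Xf) by (apply Good_Tp; auto).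
  assert (Gg : Good s K r Xg) by (apply Good_Tp; auto).
  assert (P1 := N_nn a s K r (Fadd (Fscal (INR (S k)) Xf) (Fscal (2 * c * sg) g)) HK
     (Good_add _ _ _ _ _ (Good_scal _ _ _ _ _ Gf) (Good_scal _ _ _ _ _ Hg))).
  assert (P2 := N_nn a s K r (Fadd (Fscal (INR (S k)) Xg) (Fscal (- (2 * c * sg)) f)) HK
     (Good_add _ _ _ _ _ (Good_scal _ _ _ _ _ Gg) (Good_scal _ _ _ _ _ Hf))).
  rewrite (N_two a s K r) in P1, P2; auto.
  assert (Rf := N_Tp_ge a s K r k f HK Ha Hr Hrho Hf). assert (Rg := N_Tp_ge a s K r k g HK Ha Hr Hrho Hg).
  fold Xf in Rf. fold Xg in Rg. fold rho in Rf, Rg.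
  assert (n1 := N_nn a s K r f HK Hf). assert (n2 := N_nn a s K r g HK Hg).
  assert (hn : 1 <= INR (S k)). { rewrite S_INR. assert (0 <= INR k) by apply pos_INR. lra. }
  rewrite (ip_sym _ _ _ Xf g) in P1. rewrite (ip_sym _ _ _ Xg f) in P2.
  set (n := INR (S k)) in *.
  set (NXf := ip a s K Xf Xf) in *. set (NXg := ip a s K Xg Xg) in *.
  set (Nf0 := ip a s K f f) in *. set (Ng0 := ip a s K g g) in *.
  set (Ig := ip a s K g Xf) in *. set (If := ip a s K f Xg) in *.
  assert (nXf : 0 <= NXf) by (eapply N_nn; eauto). assert (nXg : 0 <= NXg) by (eapply N_nn; eauto).
  assert (hn2 : 1 <= n ^ 2) by nra.
  assert (Q1 : a * (n ^ 2 * NXf) >= a * (rho ^ k * Nf0)).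
  { apply Rle_ge, Rmult_le_compat_l; [lra|]. 
    assert (NXf <= n^2 * NXf) by nra. lra. }
  assert (Q2 : a * (n ^ 2 * NXg) >= a * (rho ^ k * Ng0)).
  { apply Rle_ge, Rmult_le_compat_l; [lra|]. 
    assert (NXg <= n^2 * NXg) by nra. lra. }
  assert (Q3 : 2 * a * c ^ 2 * (Nf0 + Ng0) <= a / 2 * rho ^ k * (Nf0 + Ng0)).
  { assert (0 <= Nf0 + Ng0) by lra. assert (2 * c ^ 2 <= a / 2 * rho ^ k * / a) by (field_simplify; lra).
    apply Rmult_le_compat_r; auto. assert (0 <= c ^ 2) by nra. nra. }
  assert (Q4 : a * (n ^ 2 * NXf + 4 * n * c * sg * Ig + 4 * c ^ 2 * Ng0) >= 0).
  { apply Rle_ge. apply Rmult_le_pos. lra. replace (4 * c ^ 2 * Ng0) with ((2 * c * sg) ^ 2 * Ng0). nra.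
    replace ((2 * c * sg) ^ 2) with (4 * c ^ 2 * sg ^ 2) by ring. rewrite Hsg; ring. }
  assert (Q5 : a * (n ^ 2 * NXg - 4 * n * c * sg * If + 4 * c ^ 2 * Nf0) >= 0).
  { apply Rle_ge. apply Rmult_le_pos. lra. replace (4 * c ^ 2 * Nf0) with ((- (2 * c * sg)) ^ 2 * Nf0). nra.
    replace ((- (2 * c * sg)) ^ 2) with (4 * c ^ 2 * sg ^ 2) by ring. rewrite Hsg; ring. }
  assert (S2 : sg ^ 2 * (ip a s K (Shn (S k) f) (Shn (S k) f)) = ip a s K (Shn (S k) f) (Shn (S k) f)) by (rewrite Hsg; ring).
  assert (S3 : sg ^ 2 * (ip a s K (Shn (S k) g) (Shn (S k) g)) = ip a s K (Shn (S k) g) (Shn (S k) g)) by (rewrite Hsg; ring).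
  assert (S4 : sg ^ 2 * (ip a s K (Tp a s (S k) f) (Tp a s (S k) f)) = ip a s K (Tp a s (S k) f) (Tp a s (S k) f)) by (rewrite Hsg; ring).
  assert (S5 : sg ^ 2 * (ip a s K (Tp a s (S k) g) (Tp a s (S k) g)) = ip a s K (Tp a s (S k) g) (Tp a s (S k) g)) by (rewrite Hsg; ring).
  rewrite S2, S3, S4, S5.
  lra.
  all: first [apply (Good_Tp a s K r k) | apply (Good_Shn s K r k)]; auto.
Qed.

Definition Kfam (a s : R) (n : nat) (F : Fam) : Fam := Fadd (Shn n F) (Fscal (-1) (Tp a s n F)).

Lemma Good_Kfam a s K r n F : Good s K r F -> Good s K r (Kfam a s n F).
Proof. intros. unfold Kfam. apply Good_add. apply Good_Shn; auto. apply Good_scal. apply Good_Tp; auto. Qed.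

Lemma antisym a s K r n A B : 0 < K -> (-1) ^ n = 1 -> Good s K r A -> Good s K r B ->
  ip a s K A (Kfam a s n B) = - ip a s K B (Kfam a s n A).
Proof. intros HK Hn HA HB. unfold Kfam.
  rewrite !(ip_add_r a s K r); auto; try apply Good_Shn; auto; try (apply Good_scal; apply Good_Tp; auto).
  rewrite !(ip_scal_r a s K r); auto; try apply Good_Tp; auto.
  rewrite (ip_sym _ _ _ A (Shn n B)), (adj a s K r n); auto.
  rewrite (ip_sym _ _ _ B (Shn n A)), (adj a s K r n); auto.
  rewrite Hn. ring. Qed.

Lemma ip_ex2 a s K r A B : Good s K r A -> Good s K r B ->
  ex_RInt (fun x => wt a s x * (A 0%nat x * B 0%nat x)) (-K) K.
Proof. intros. eapply ip_ex; eauto. Qed.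

Lemma ip4 a s K r A B C D : Good s K r A -> Good s K r B -> Good s K r C -> Good s K r D ->
  RInt (fun x => wt a s x * (A 0%nat x * A 0%nat x) - wt a s x * (B 0%nat x * B 0%nat x)
               + wt a s x * (C 0%nat x * C 0%nat x) - wt a s x * (D 0%nat x * D 0%nat x)) (-K) K
  = ip a s K A A - ip a s K B B + ip a s K C C - ip a s K D D.
Proof. intros HA HB HC HD.
  assert (eA := ip_ex2 a s K r A A HA HA). assert (eB := ip_ex2 a s K r B B HB HB).
  assert (eC := ip_ex2 a s K r C C HC HC). assert (eD := ip_ex2 a s K r D D HD HD).
  unfold ip. rewrite RInt_minus'. rewrite RInt_plus'. rewrite RInt_minus'. auto.
  all: auto.
  apply (ex_RInt_minus (V:=R_CompleteNormedModule)); auto.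
  apply (ex_RInt_plus (V:=R_CompleteNormedModule)); auto. apply (ex_RInt_minus (V:=R_CompleteNormedModule)); auto.
Qed.

Lemma c2_swap F t x : continuity_2d_pt F t x -> continuity_2d_pt (fun x t => F t x) x t.
Proof. intros H eps. destruct (H eps) as [d Hd]. exists d. intros u v Hu Hv. apply Hd; auto. Qed.

Lemma c2_x F t x : continuity_2d_pt F t x -> continuity_pt (F t) x.
Proof. intros H. apply continuity_pt_filterlim. apply (continuity_2d_pt_filterlim F t x) in H.
  intros P HP. specialize (H P HP). destruct H as [d Hd]. exists d. intros y Hy. apply (Hd (t, y)).
  split; simpl. apply ball_center. auto. Qed.

Lemma c2_t F t x : continuity_2d_pt F t x -> continuity_pt (fun t => F t x) t.
Proof. intros H. exact (c2_x (fun x t => F t x) x t (c2_swap F t x H)). Qed.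

Lemma Icont F K : 0 < K -> (forall t x, continuity_2d_pt F t x) ->
  forall t0, continuity_pt (fun t => RInt (F t) (-K) K) t0.
Proof. intros HK HF t0.
  assert (Hex : forall t, ex_RInt (F t) (-K) K).
  { intros t. apply cts_exRInt. intros x. apply c2_x. auto. }
  intros eps Heps.
  assert (He' : 0 < eps / (2 * K + 1)). { apply Rdiv_lt_0_compat; lra. }
  destruct (uniform_continuity_2d_1d (fun x t => F t x) (-K) K t0 (fun x _ => c2_swap F t0 x (HF t0 x)) (mkposreal _ He')) as [d Hd].
  exists d. split. apply cond_pos. intros t [_ Ht]. simpl in Ht. unfold dist in Ht; simpl in Ht. unfold R_dist in Ht.
  simpl. unfold R_dist. rewrite <- RInt_minus'; auto.
  apply Rle_lt_trans with ((K - - K) * (eps / (2 * K + 1))).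
  apply abs_RInt_le_const. lra. apply cts_exRInt. apply cts_minus; intros x; apply c2_x; auto.
  intros x Hx. left. assert (0 < d) by apply cond_pos. apply Rabs_def2 in Ht.
  apply (Hd x t0 x t); simpl; try lra. rewrite Rminus_eq_0, Rabs_R0. lra.
  apply Rmult_lt_reg_r with (2 * K + 1). lra. field_simplify; lra.
Qed.

Lemma RInt_zero' f a b : (forall x, Rmin a b < x < Rmax a b -> f x = 0) -> RInt f a b = 0.
Proof. intros H. rewrite (RInt_ext' f (fun _ => 0)); auto. rewrite RInt_const. unfold scal; simpl; unfold mult; simpl; ring. Qed.

Lemma DRInt_eq f a b : a <= b -> (forall z, a <= z <= b -> continuity_pt f z) ->
  Defs.RInt f a b = RInt f a b.
Proof. intros Hab Hf. unfold Defs.RInt.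
  assert (Hex : ex_RInt f a b).
  { apply (ex_RInt_continuous (V:=R_CompleteNormedModule)). intros z Hz.
    rewrite Rmin_left, Rmax_right in Hz by lra. apply continuity_pt_filterlim. auto. }
  assert (pr := ex_RInt_Reals_0 f a b Hex).
  set (P := fun v => exists pr : Riemann_integrable f a b, RiemannInt pr = v).
  assert (Hs := epsilon_spec (inhabits 0) P (ex_intro _ _ (ex_intro _ pr eq_refl))).
  destruct Hs as [pr' Hpr']. rewrite <- Hpr'. rewrite (RInt_Reals f a b pr'). auto.
Qed.

Lemma RInt_line_eq f K : 0 < K -> cts f -> (forall x, K <= Rabs x -> f x = 0) ->
  RInt_line f = RInt f (-K) K.
Proof. intros HK Hf Hz. unfold RInt_line.
  assert (Hint : forall M, K <= M -> Defs.RInt f (-M) M = RInt f (-K) K).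
  { intros M HM. rewrite DRInt_eq; [|lra|intros; apply Hf]. rewrite <- (RInt_Chasles f (-M) (-K) M); try apply cts_exRInt; auto.
    rewrite <- (RInt_Chasles f (-K) K M); try apply cts_exRInt; auto.
    rewrite (RInt_zero' f (-M) (-K)). rewrite (RInt_zero' f K M). unfold plus; simpl. ring.
    intros x Hx. apply Hz. rewrite Rmin_left in Hx by lra. rewrite Rabs_right; lra.
    intros x Hx. apply Hz. rewrite Rmin_left in Hx by lra. rewrite Rmax_right in Hx by lra. rewrite Rabs_left; lra. }
  set (P := fun v : R => forall eps : R, eps > 0 -> exists M0 : R, forall M : R, M >= M0 -> Rabs (Defs.RInt f (- M) M - v) < eps).
  assert (HP : P (RInt f (-K) K)).
  { intros eps He. exists K. intros M HM. rewrite Hint by lra. rewrite Rminus_eq_0, Rabs_R0. lra. }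
  assert (Hs := epsilon_spec (inhabits 0) P (ex_intro _ _ HP)).
  set (v := epsilon (inhabits 0) P) in *.
  destruct (Req_dec v (RInt f (-K) K)) as [E|E]; auto. exfalso.
  assert (Hd : Rabs (RInt f (-K) K - v) > 0) by (apply Rabs_pos_lt; intro; apply E; lra).
  destruct (Hs _ Hd) as [M0 HM0]. specialize (HM0 (Rmax M0 K) (Rle_ge _ _ (Rmax_l _ _))).
  rewrite Hint in HM0 by apply Rmax_r. lra.
Qed.

Lemma iint_eq F K : 0 < K -> (forall t x, continuity_2d_pt F t x) ->
  (forall t x, K <= Rabs x -> F t x = 0) ->
  iint F = RInt (fun t => RInt (F t) (-K) K) 0 1.
Proof. intros HK HF Hz. unfold iint.
  rewrite (DRInt_eq (fun t => RInt_line (fun x => F t x))). 2: lra.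
  - apply RInt_ext'. intros t _. apply RInt_line_eq; auto. intros x; apply c2_x; auto.
  - intros z _. eapply continuity_pt_ext. 2: apply (Icont F K HK HF z).
    intros t. simpl. symmetry. apply RInt_line_eq; auto. intros x; apply c2_x; auto.
Qed.

Lemma Derive_eq2 (H Ht : R -> R -> R) : (forall t x, derivable_pt_lim (fun s => H s x) t (Ht t x)) ->
  (fun u v => Derive (fun z => H z v) u) = Ht.
Proof. intros HD. apply functional_extensionality; intros u; apply functional_extensionality; intros v.
  apply is_derive_unique. apply is_derive_Reals. apply HD. Qed.

Lemma X_ibp (H Ht Hx : R -> R -> R) (c : R -> R) K :
  0 < K ->
  (forall t x, derivable_pt_lim (fun s => H s x) t (Ht t x)) ->
  (forall t x, derivable_pt_lim (H t) x (Hx t x)) ->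
  (forall t x, continuity_2d_pt Ht t x) ->
  (forall t x, continuity_2d_pt Hx t x) ->
  (forall t x, K <= Rabs x -> H t x = 0) ->
  (forall x, H 0 x = 0) -> (forall x, H 1 x = 0) ->
  RInt (fun t => RInt (fun x => Ht t x - c t * Hx t x) (-K) K) 0 1 = 0.
Proof. intros HK HDt HDx HCt HCx Hz H0 H1.
  assert (Hctx : forall t, cts (H t)). { intros t. apply (dpl_cts _ _ (HDx t)). }
  assert (E1 : forall t, RInt (fun x => Ht t x - c t * Hx t x) (-K) K = RInt (Ht t) (-K) K).
  { intros t. rewrite RInt_minus'. rewrite RInt_scal'.
    rewrite (is_RInt_der0 (H t) (Hx t) K). rewrite Rmult_0_r. apply Rminus_0_r. auto. intros x; apply c2_x; auto.
    apply Hz. rewrite Rabs_right; lra. apply Hz. rewrite Rabs_left; lra.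
    apply cts_exRInt; intros x; apply c2_x; auto.
    apply cts_exRInt; intros x; apply c2_x; auto.
    apply cts_exRInt. apply cts_mult. apply cts_const. intros x; apply c2_x; auto. }
  rewrite (RInt_ext' _ (fun t => RInt (Ht t) (-K) K)) by (intros; apply E1).
  set (G := fun t => RInt (H t) (-K) K).
  assert (HG : forall t, is_derive G t (RInt (Ht t) (-K) K)).
  { intros t. unfold G.
    assert (Hp := is_derive_RInt_param (fun u x => H u x) (-K) K t).
    cbv beta in Hp.
    replace (RInt (Ht t) (-K) K) with (RInt (fun x => Derive (fun u => H u x) t) (-K) K).
    apply Hp.
    - apply filter_forall. intros y x _. exists (Ht y x). apply is_derive_Reals. apply HDt.
    - intros x _. rewrite (Derive_eq2 H Ht HDt). apply HCt.
    - apply filter_forall. intros y. apply cts_exRInt. apply Hctx.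
    - apply RInt_ext'. intros x _. apply is_derive_unique. apply is_derive_Reals. apply HDt. }
  assert (E2 := is_RInt_derive (V:=R_CompleteNormedModule) G (fun t => RInt (Ht t) (-K) K) 0 1
    (fun x _ => HG x) (fun x _ => proj1 (continuity_pt_filterlim _ _) (Icont Ht K HK HCt x))).
  apply is_RInt_unique in E2. rewrite E2. unfold G. rewrite !RInt_zero'.
  unfold minus, plus, opp; simpl; ring.
  intros; apply H0. intros; apply H1.
Qed.

Lemma cont2_c2 F : cont2 F -> forall t x, continuity_2d_pt F t x.
Proof. intros H t x eps. destruct (H t x eps (cond_pos eps)) as [d [Hd Hd2]].
  exists (mkposreal d Hd). intros u v Hu Hv. apply Hd2; auto. Qed.

Lemma c2_proj1 (f : R -> R) t x : continuity_pt f t -> continuity_2d_pt (fun t x => f t) t x.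
Proof. intros H. apply (continuity_1d_2d_pt_comp f (fun u v => u) t x H). apply continuity_2d_pt_id1. Qed.

Lemma c2_exp F t x : continuity_2d_pt F t x -> continuity_2d_pt (fun t x => exp (F t x)) t x.
Proof. intros H. apply (continuity_1d_2d_pt_comp exp F t x); auto.
  apply derivable_continuous_pt. exists (exp (F t x)). apply derivable_pt_lim_exp. Qed.

Lemma c2_pow F n t x : continuity_2d_pt F t x -> continuity_2d_pt (fun t x => F t x ^ n) t x.
Proof. intros H. induction n. simpl. apply continuity_2d_pt_const. simpl.
  apply (continuity_2d_pt_mult F (fun t x => F t x ^ n)); auto. Qed.

Lemma c2_minus F G t x : continuity_2d_pt F t x -> continuity_2d_pt G t x ->
  continuity_2d_pt (fun t x => F t x - G t x) t x.
Proof. intros. apply (continuity_2d_pt_minus F G); auto. Qed.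

Ltac c2tac := repeat first
  [ apply c2_exp | apply c2_pow
  | apply (continuity_2d_pt_plus (fun t x => _) (fun t x => _))
  | apply (continuity_2d_pt_minus (fun t x => _) (fun t x => _))
  | apply (continuity_2d_pt_mult (fun t x => _) (fun t x => _))
  | apply (continuity_2d_pt_opp (fun t x => _))
  | apply continuity_2d_pt_const | apply continuity_2d_pt_id1 | apply continuity_2d_pt_id2 ].

Lemma test_c2 (F : R -> R -> R) t x : continuity_2d_pt F t x ->
  continuity_2d_pt (fun t x => exp (2 * x * F t x) + (F t x - x) ^ 2) t x.
Proof. intros H. c2tac; auto. Qed.

Lemma Rabs_le_inv2 x y : Rabs x <= y -> - y <= x <= y.
Proof. intros H. destruct (Rcase_abs x); [rewrite Rabs_left in H|rewrite Rabs_right in H]; lra. Qed.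

Lemma req5 (A B C : R) : A = A - B - C + B + C.
Proof. ring. Qed.

Ltac rring := match goal with |- ?l = ?r => change (@eq R l r) end; ring.

Section G.
Variables (Ur Ui : nat -> nat -> R -> R -> R) (Phi : nat -> R -> R) (a Rr K a0 b0 d1 d2 : R).
Hypothesis HUr : smooth_family Ur.
Hypothesis HUi : smooth_family Ui.
Hypothesis HPhi : forall n t, 0 < t < 1 -> derivable_pt_lim (Phi n) t (Phi (S n) t).
Hypothesis Ha : 0 < a.
Hypothesis HR : 0 < Rr.
Hypothesis HK : 0 < K.
Hypothesis Ha0 : 0 < a0.
Hypothesis Hb0 : b0 < 1.
Hypothesis Hd1 : 0 < d1.
Hypothesis Hsupp : forall i j t x, (Ur i j t x <> 0 \/ Ui i j t x <> 0) ->
  a0 <= t <= b0 /\ Rabs x < K /\ Rr * d1 <= Rabs (x + Rr * Phi 0%nat t) <= Rr * d2.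

Definition st t := Rr * Phi 0%nat t.
Definition ct t := Rr * Phi 1%nat t.
Definition ct' t := Rr * Phi 2%nat t.
Definition rr := Rr * d1.
Definition FF t : Fam := fun j x => Ur 0%nat j t x.
Definition GG t : Fam := fun j x => Ui 0%nat j t x.
Definition XF t : Fam := fun j x => Ur 1%nat j t x - ct t * Ur 0%nat (S j) t x.
Definition XG t : Fam := fun j x => Ui 1%nat j t x - ct t * Ui 0%nat (S j) t x.
Definition W t x := wt a (st t) x.

Lemma vanU i j t x : ~ (a0 <= t <= b0 /\ Rabs x < K /\ Rr * d1 <= Rabs (x + Rr * Phi 0%nat t) <= Rr * d2) ->
  Ur i j t x = 0 /\ Ui i j t x = 0.
Proof. intros H. destruct (Req_dec (Ur i j t x) 0); destruct (Req_dec (Ui i j t x) 0); auto;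
  exfalso; apply H; apply (Hsupp i j); auto. Qed.

Lemma vanU_t i j t x : (t < a0 \/ b0 < t) -> Ur i j t x = 0 /\ Ui i j t x = 0.
Proof. intros H; apply vanU; lra. Qed.
Lemma vanU_x i j t x : K <= Rabs x -> Ur i j t x = 0 /\ Ui i j t x = 0.
Proof. intros H; apply vanU; lra. Qed.
Lemma vanU_r i j t x : Rabs (x + st t) < rr -> Ur i j t x = 0 /\ Ui i j t x = 0.
Proof. unfold st, rr. intros H; apply vanU; lra. Qed.

Lemma Good_FF t : Good (st t) K rr (FF t).
Proof. unfold FF; repeat split; intros. apply (proj1 (proj2 HUr)).
  apply vanU_x; auto. apply vanU_r; auto. Qed.
Lemma Good_GG t : Good (st t) K rr (GG t).
Proof. unfold GG; repeat split; intros. apply (proj1 (proj2 HUi)).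
  apply vanU_x; auto. apply vanU_r; auto. Qed.
Lemma Good_XF t : Good (st t) K rr (XF t).
Proof. unfold XF; repeat split; intros.
  apply (D_minus _ _ x _ _ (proj1 (proj2 HUr) 1%nat j t x) (D_scal (ct t) _ x _ (proj1 (proj2 HUr) 0%nat (S j) t x))).
  rewrite (proj1 (vanU_x 1 j t x H)), (proj1 (vanU_x 0 (S j) t x H)); ring.
  rewrite (proj1 (vanU_r 1 j t x H)), (proj1 (vanU_r 0 (S j) t x H)); ring. Qed.
Lemma Good_XG t : Good (st t) K rr (XG t).
Proof. unfold XG; repeat split; intros.
  apply (D_minus _ _ x _ _ (proj1 (proj2 HUi) 1%nat j t x) (D_scal (ct t) _ x _ (proj1 (proj2 HUi) 0%nat (S j) t x))).
  rewrite (proj2 (vanU_x 1 j t x H)), (proj2 (vanU_x 0 (S j) t x H)); ring.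
  rewrite (proj2 (vanU_r 1 j t x H)), (proj2 (vanU_r 0 (S j) t x H)); ring. Qed.

Lemma st_deriv t : 0 < t < 1 -> derivable_pt_lim st t (ct t).
Proof. intros H. unfold st, ct. apply D_scal. apply HPhi; auto. Qed.

Lemma TpX (F XX : R -> Fam) t0 : 0 < t0 < 1 ->
  (forall j x, derivable_pt_lim (fun t => F t j x) t0 (XX t0 j x + ct t0 * F t0 (S j) x)) ->
  forall k j x, derivable_pt_lim (fun t => Tp a (st t) k (F t) j x) t0
     (Tp a (st t0) k (XX t0) j x + ct t0 * Tp a (st t0) k (F t0) (S j) x).
Proof. intros Ht HF k. induction k; intros j x.
  - simpl. apply HF.
  - simpl Tp. unfold Tf at 1 2 3.
    assert (Hl : derivable_pt_lim (fun t => 2 * lam a (st t) x) t0 (2 * (a * ct t0))).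
    { apply D_scal. unfold lam. apply D_scal.
      apply (D_ext (fun t => x + st t) _ t0 (0 + ct t0)); [intros; ring|ring|].
      apply D_plus. apply D_const. apply st_deriv; auto. }
    assert (A := IHk (S j) x).
    assert (B := D_mult _ _ t0 _ _ Hl (IHk j x)).
    assert (C := D_scal (2 * INR j * a) _ t0 _ (IHk (pred j) x)).
    assert (D := D_plus _ _ t0 _ _ (D_plus _ _ t0 _ _ A B) C).
    eapply D_ext; [| | exact D]. intros; reflexivity.
    cbv beta. unfold Tf. destruct j.
    + simpl pred. simpl INR. ring.
    + simpl pred. rewrite !S_INR. ring.
Qed.


Lemma Phi_cts n t : 0 < t < 1 -> continuity_pt (Phi n) t.
Proof. intros H. apply derivable_continuous_pt. exists (Phi (S n) t). apply HPhi; auto. Qed.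

Lemma c2_U i j t x : continuity_2d_pt (fun t x => Ur i j t x) t x.
Proof. apply cont2_c2. apply (proj2 (proj2 HUr)). Qed.
Lemma c2_V i j t x : continuity_2d_pt (fun t x => Ui i j t x) t x.
Proof. apply cont2_c2. apply (proj2 (proj2 HUi)). Qed.
Lemma c2_Phi n t x : 0 < t < 1 -> continuity_2d_pt (fun t x => Phi n t) t x.
Proof. intros H. apply c2_proj1. apply Phi_cts; auto. Qed.
Lemma c2_st t x : 0 < t < 1 -> continuity_2d_pt (fun t x => st t) t x.
Proof. intros H. unfold st. c2tac. apply c2_Phi; auto. Qed.
Lemma c2_ct t x : 0 < t < 1 -> continuity_2d_pt (fun t x => ct t) t x.
Proof. intros H. unfold ct. c2tac. apply c2_Phi; auto. Qed.
Lemma c2_ct' t x : 0 < t < 1 -> continuity_2d_pt (fun t x => ct' t) t x.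
Proof. intros H. unfold ct'. c2tac. apply c2_Phi; auto. Qed.
Lemma c2_lam t x : 0 < t < 1 -> continuity_2d_pt (fun t x => lam a (st t) x) t x.
Proof. intros H. unfold lam. apply (continuity_2d_pt_mult (fun _ _ => a) (fun t x => x + st t)).
  apply continuity_2d_pt_const. apply (continuity_2d_pt_plus (fun t x => x) (fun t x => st t)).
  apply continuity_2d_pt_id2. apply c2_st; auto. Qed.
Lemma c2_W t x : 0 < t < 1 -> continuity_2d_pt (fun t x => W t x) t x.
Proof. intros H. unfold W, wt. apply (c2_exp (fun t x => a * (x + st t) ^ 2)).
  apply (continuity_2d_pt_mult (fun _ _ => a) (fun t x => (x + st t) ^ 2)).
  apply continuity_2d_pt_const. apply (c2_pow (fun t x => x + st t)).
  apply (continuity_2d_pt_plus (fun t x => x) (fun t x => st t)).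
  apply continuity_2d_pt_id2. apply c2_st; auto. Qed.

Lemma Tp_c2 (F : R -> Fam) t0 x0 : 0 < t0 < 1 ->
  (forall j, continuity_2d_pt (fun t x => F t j x) t0 x0) ->
  forall k j, continuity_2d_pt (fun t x => Tp a (st t) k (F t) j x) t0 x0.
Proof. intros Ht HF k. induction k; intros j; simpl; auto. unfold Tf.
  apply (continuity_2d_pt_plus (fun t x => _ + _) (fun t x => _)).
  apply (continuity_2d_pt_plus (fun t x => _) (fun t x => _)). auto.
  apply (continuity_2d_pt_mult (fun t x => 2 * lam a (st t) x) (fun t x => _)).
  apply (continuity_2d_pt_mult (fun t x => 2) (fun t x => lam a (st t) x)).
  apply continuity_2d_pt_const. apply c2_lam; auto. auto.
  apply (continuity_2d_pt_mult (fun t x => _) (fun t x => _)). apply continuity_2d_pt_const. auto. Qed.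

Lemma c2_FF t x j : continuity_2d_pt (fun t x => FF t j x) t x.
Proof. unfold FF. apply c2_U. Qed.
Lemma c2_GG t x j : continuity_2d_pt (fun t x => GG t j x) t x.
Proof. unfold GG. apply c2_V. Qed.
Lemma c2_XF t x j : 0 < t < 1 -> continuity_2d_pt (fun t x => XF t j x) t x.
Proof. intros H. unfold XF. apply (c2_minus (fun t x => Ur 1%nat j t x) (fun t x => ct t * Ur 0%nat (S j) t x)).
  apply c2_U. apply (continuity_2d_pt_mult (fun t x => ct t) (fun t x => _)). apply c2_ct; auto. apply c2_U. Qed.
Lemma c2_XG t x j : 0 < t < 1 -> continuity_2d_pt (fun t x => XG t j x) t x.
Proof. intros H. unfold XG. apply (c2_minus (fun t x => Ui 1%nat j t x) (fun t x => ct t * Ui 0%nat (S j) t x)).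
  apply c2_V. apply (continuity_2d_pt_mult (fun t x => ct t) (fun t x => _)). apply c2_ct; auto. apply c2_V. Qed.

Ltac c2base := first [ apply c2_U | apply c2_V | apply c2_W; assumption | apply c2_lam; assumption
  | apply c2_ct; assumption | apply c2_ct'; assumption | apply c2_st; assumption
  | apply (Tp_c2 FF); [assumption| intros; apply c2_FF]
  | apply (Tp_c2 GG); [assumption| intros; apply c2_GG]
  | apply (Tp_c2 XF); [assumption| intros; apply c2_XF; assumption]
  | apply (Tp_c2 XG); [assumption| intros; apply c2_XG; assumption]
  | apply c2_FF | apply c2_GG | apply c2_XF; assumption | apply c2_XG; assumption ].

Ltac c2go := repeat first [ c2base | apply continuity_2d_pt_const | apply continuity_2d_pt_id2
  | apply (c2_exp (fun t x => _)) | apply (c2_pow (fun t x => _))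
  | apply (continuity_2d_pt_plus (fun t x => _) (fun t x => _))
  | apply (continuity_2d_pt_minus (fun t x => _) (fun t x => _))
  | apply (continuity_2d_pt_mult (fun t x => _) (fun t x => _))
  | apply (continuity_2d_pt_opp (fun t x => _)) ].

Definition Zr t x := forall i j, Ur i j t x = 0 /\ Ui i j t x = 0.
Lemma Zr_t t x : t < a0 \/ b0 < t -> Zr t x.
Proof. intros H i j. apply vanU_t; auto. Qed.
Lemma Zr_x t x : K <= Rabs x -> Zr t x.
Proof. intros H i j. apply vanU_x; auto. Qed.

Lemma glob_c2 F : (forall t x, 0 < t < 1 -> continuity_2d_pt F t x) ->
  (forall t x, Zr t x -> F t x = 0) -> forall t x, continuity_2d_pt F t x.
Proof. intros H1 H2 t x.
  destruct (Rlt_or_le t a0) as [Hl|Hl]; [|destruct (Rlt_or_le b0 t) as [Hr|Hr]].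
  - apply (continuity_2d_pt_ext_loc (fun _ _ => 0)). 2: apply continuity_2d_pt_const.
    assert (Hd : 0 < a0 - t) by lra. exists (mkposreal _ Hd). intros u v Hu _. simpl in Hu.
    symmetry; apply H2. apply Zr_t. left. apply Rabs_def2 in Hu. lra.
  - apply (continuity_2d_pt_ext_loc (fun _ _ => 0)). 2: apply continuity_2d_pt_const.
    assert (Hd : 0 < t - b0) by lra. exists (mkposreal _ Hd). intros u v Hu _. simpl in Hu.
    symmetry; apply H2. apply Zr_t. right. apply Rabs_def2 in Hu. lra.
  - apply H1. lra.
Qed.

Lemma dpl_loc0 (f : R -> R) t d : 0 < d -> (forall s, Rabs (s - t) < d -> f s = 0) -> derivable_pt_lim f t 0.
Proof. intros Hd H eps He. exists (mkposreal d Hd). intros h Hh Hh2. simpl in Hh2.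
  rewrite (H (t + h)), (H t). replace ((0 - 0) / h - 0) with 0 by (unfold Rdiv; ring). rewrite Rabs_R0. lra.
  rewrite Rminus_eq_0, Rabs_R0; lra. replace (t + h - t) with h by ring. auto. Qed.

Lemma glob_deriv (H Ht : R -> R -> R) : (forall t x, 0 < t < 1 -> derivable_pt_lim (fun s => H s x) t (Ht t x)) ->
  (forall t x, Zr t x -> H t x = 0 /\ Ht t x = 0) -> forall t x, derivable_pt_lim (fun s => H s x) t (Ht t x).
Proof. intros H1 H2 t x.
  destruct (Rlt_or_le t a0) as [Hl|Hl]; [|destruct (Rlt_or_le b0 t) as [Hr|Hr]].
  - rewrite (proj2 (H2 t x (Zr_t t x (or_introl Hl)))). apply (dpl_loc0 _ t (a0 - t)). lra.
    intros u Hu. apply H2. apply Zr_t. left. apply Rabs_def2 in Hu. lra.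
  - rewrite (proj2 (H2 t x (Zr_t t x (or_intror Hr)))). apply (dpl_loc0 _ t (t - b0)). lra.
    intros u Hu. apply H2. apply Zr_t. right. apply Rabs_def2 in Hu. lra.
  - apply H1. lra.
Qed.

Lemma Tp_zero a' s' k (F : Fam) x : (forall j, F j x = 0) -> forall j, Tp a' s' k F j x = 0.
Proof. intros H. induction k; intros j; simpl; auto. unfold Tf. rewrite !IHk. ring. Qed.

Variable m : nat.
Hypothesis Hm : (1 <= m)%nat.
Definition nn := (2 * m)%nat.
Definition sg := (-1) ^ m.

Definition Kf t x := Ur 0%nat nn t x - Tp a (st t) nn (FF t) 0%nat x.
Definition Kg t x := Ui 0%nat nn t x - Tp a (st t) nn (GG t) 0%nat x.
Definition KXf t x := XF t nn x - Tp a (st t) nn (XF t) 0%nat x.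
Definition KXg t x := XG t nn x - Tp a (st t) nn (XG t) 0%nat x.
Definition u2 t x := Ur 0%nat 0%nat t x ^ 2 + Ui 0%nat 0%nat t x ^ 2.
Definition Ef t x := W t x * ((Ui 1%nat 0%nat t x + sg * Ur 0%nat nn t x) ^ 2 + (- Ur 1%nat 0%nat t x + sg * Ui 0%nat nn t x) ^ 2).
Definition al_g t x := ct t * Ui 0%nat 1%nat t x + sg * Ur 0%nat nn t x.
Definition be_g t x := ct t * Tf a (st t) (GG t) 0%nat x + sg * Tp a (st t) nn (FF t) 0%nat x.
Definition al_f t x := - ct t * Ur 0%nat 1%nat t x + sg * Ui 0%nat nn t x.
Definition be_f t x := - ct t * Tf a (st t) (FF t) 0%nat x + sg * Tp a (st t) nn (GG t) 0%nat x.
Definition DI t x := W t x * (al_g t x ^ 2 - be_g t x ^ 2 + al_f t x ^ 2 - be_f t x ^ 2).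
Definition H1 t x := ct t * lam a (st t) x * W t x * u2 t x.
Definition H1t t x := ct' t * lam a (st t) x * W t x * u2 t x + ct t * (a * ct t) * W t x * u2 t x
  + ct t * lam a (st t) x * (W t x * (2 * lam a (st t) x * ct t)) * u2 t x
  + ct t * lam a (st t) x * W t x * (2 * (Ur 0%nat 0%nat t x * Ur 1%nat 0%nat t x + Ui 0%nat 0%nat t x * Ui 1%nat 0%nat t x)).
Definition H1x t x := ct t * a * W t x * u2 t x + ct t * lam a (st t) x * (W t x * (2 * lam a (st t) x)) * u2 t x
  + ct t * lam a (st t) x * W t x * (2 * (Ur 0%nat 0%nat t x * Ur 0%nat 1%nat t x + Ui 0%nat 0%nat t x * Ui 0%nat 1%nat t x)).
Definition dtKf t x := Ur 1%nat nn t x - (Tp a (st t) nn (XF t) 0%nat x + ct t * Tp a (st t) nn (FF t) 1%nat x).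
Definition dtKg t x := Ui 1%nat nn t x - (Tp a (st t) nn (XG t) 0%nat x + ct t * Tp a (st t) nn (GG t) 1%nat x).
Definition dxKf t x := Ur 0%nat (S nn) t x - Tp a (st t) nn (FF t) 1%nat x.
Definition dxKg t x := Ui 0%nat (S nn) t x - Tp a (st t) nn (GG t) 1%nat x.
Definition H2 t x := W t x * (Ui 0%nat 0%nat t x * Kf t x - Ur 0%nat 0%nat t x * Kg t x).
Definition H2t t x := W t x * (2 * lam a (st t) x * ct t) * (Ui 0%nat 0%nat t x * Kf t x - Ur 0%nat 0%nat t x * Kg t x)
  + W t x * (Ui 1%nat 0%nat t x * Kf t x + Ui 0%nat 0%nat t x * dtKf t x - Ur 1%nat 0%nat t x * Kg t x - Ur 0%nat 0%nat t x * dtKg t x).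
Definition H2x t x := W t x * (2 * lam a (st t) x) * (Ui 0%nat 0%nat t x * Kf t x - Ur 0%nat 0%nat t x * Kg t x)
  + W t x * (Ui 0%nat 1%nat t x * Kf t x + Ui 0%nat 0%nat t x * dxKf t x - Ur 0%nat 1%nat t x * Kg t x - Ur 0%nat 0%nat t x * dxKg t x).
Definition H3 t x := -2 * H1 t x + sg * H2 t x.
Definition H3t t x := -2 * H1t t x + sg * H2t t x.
Definition H3x t x := -2 * H1x t x + sg * H2x t x.
Definition ErrI t x := 2 * ct' t * lam a (st t) x * W t x * u2 t x.
Definition AS t x := W t x * (XG t 0%nat x * Kf t x - XF t 0%nat x * Kg t x - Ui 0%nat 0%nat t x * KXf t x + Ur 0%nat 0%nat t x * KXg t x).
Definition Rt t x := DI t x + (H3t t x - ct t * H3x t x) + ErrI t x + sg * AS t x.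

Lemma P1 t x : Ef t x >= Rt t x.
Proof.
  assert (E : Ef t x - Rt t x = W t x * ((XG t 0%nat x + be_g t x) ^ 2 + (- XF t 0%nat x + be_f t x) ^ 2)).
  { unfold Ef, Rt, DI, H3t, H3x, H1t, H1x, H2t, H2x, ErrI, AS, KXf, KXg, dtKf, dtKg, dxKf, dxKg, al_g, al_f, be_g, be_f, u2.
    unfold Kf, Kg, XF, XG, Tf, GG, FF. simpl pred. simpl INR. ring. }
  assert (0 < W t x) by (apply wt_pos).
  assert (0 <= (XG t 0%nat x + be_g t x) ^ 2 + (- XF t 0%nat x + be_f t x) ^ 2)
    by (apply Rplus_le_le_0_compat; apply pow2_ge_0).
  assert (0 <= W t x * ((XG t 0%nat x + be_g t x) ^ 2 + (- XF t 0%nat x + be_f t x) ^ 2)) by (apply Rmult_le_pos; lra).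
  lra.
Qed.

Lemma ZTpFF t x s k j : Zr t x -> Tp a s k (FF t) j x = 0.
Proof. intros HZ. apply Tp_zero. intros; apply HZ. Qed.
Lemma ZTpGG t x s k j : Zr t x -> Tp a s k (GG t) j x = 0.
Proof. intros HZ. apply Tp_zero. intros; apply HZ. Qed.
Lemma ZXF t x j : Zr t x -> XF t j x = 0.
Proof. intros HZ. unfold XF. rewrite (proj1 (HZ _ _)), (proj1 (HZ _ _)). ring. Qed.
Lemma ZXG t x j : Zr t x -> XG t j x = 0.
Proof. intros HZ. unfold XG. rewrite (proj2 (HZ _ _)), (proj2 (HZ _ _)). ring. Qed.
Lemma ZTpXF t x s k j : Zr t x -> Tp a s k (XF t) j x = 0.
Proof. intros HZ. apply Tp_zero. intros; apply ZXF; auto. Qed.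
Lemma ZTpXG t x s k j : Zr t x -> Tp a s k (XG t) j x = 0.
Proof. intros HZ. apply Tp_zero. intros; apply ZXG; auto. Qed.

Ltac zr HZ := repeat first [ rewrite (proj1 (HZ _ _)) | rewrite (proj2 (HZ _ _))
  | rewrite (ZTpFF _ _ _ _ _ HZ) | rewrite (ZTpGG _ _ _ _ _ HZ) | rewrite (ZTpXF _ _ _ _ _ HZ)
  | rewrite (ZTpXG _ _ _ _ _ HZ) | rewrite (ZXF _ _ _ HZ) | rewrite (ZXG _ _ _ HZ)
  | rewrite (ZTpFF _ _ _ 1%nat _ HZ) | rewrite (ZTpGG _ _ _ 1%nat _ HZ) ].

Ltac c2base2 := first [ c2base
  | apply (Tp_c2 FF _ _ ltac:(assumption) (fun j => c2_FF _ _ j) 1%nat)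
  | apply (Tp_c2 GG _ _ ltac:(assumption) (fun j => c2_GG _ _ j) 1%nat) ].

Ltac c2go2 := repeat first [ c2base2 | apply continuity_2d_pt_const | apply continuity_2d_pt_id2
  | apply (c2_exp (fun t x => _)) | apply (c2_pow (fun t x => _))
  | apply (continuity_2d_pt_plus (fun t x => _) (fun t x => _))
  | apply (continuity_2d_pt_minus (fun t x => _) (fun t x => _))
  | apply (continuity_2d_pt_mult (fun t x => _) (fun t x => _))
  | apply (continuity_2d_pt_opp (fun t x => _)) ].

Definition Nu t x := W t x * u2 t x.
Definition XH3 t x := H3t t x - ct t * H3x t x.

Lemma gc_Ef t x : continuity_2d_pt Ef t x.
Proof. apply glob_c2; clear t x.
  - intros t x Ht. unfold Ef. c2go2.
  - intros t x HZ. unfold Ef. zr HZ. ring. Qed.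
Lemma gc_Nu t x : continuity_2d_pt Nu t x.
Proof. apply glob_c2; clear t x.
  - intros t x Ht. unfold Nu, u2. c2go2.
  - intros t x HZ. unfold Nu, u2. zr HZ. ring. Qed.
Lemma gc_ErrI t x : continuity_2d_pt ErrI t x.
Proof. apply glob_c2; clear t x.
  - intros t x Ht. unfold ErrI, u2. c2go2.
  - intros t x HZ. unfold ErrI, u2. zr HZ. ring. Qed.
Lemma gc_H3t t x : continuity_2d_pt H3t t x.
Proof. apply glob_c2; clear t x.
  - intros t x Ht. unfold H3t, H1t, H2t, Kf, Kg, dtKf, dtKg, u2. c2go2.
  - intros t x HZ. unfold H3t, H1t, H2t, Kf, Kg, dtKf, dtKg, u2. zr HZ. ring. Qed.
Lemma gc_H3x t x : continuity_2d_pt H3x t x.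
Proof. apply glob_c2; clear t x.
  - intros t x Ht. unfold H3x, H1x, H2x, Kf, Kg, dxKf, dxKg, u2. c2go2.
  - intros t x HZ. unfold H3x, H1x, H2x, Kf, Kg, dxKf, dxKg, u2. zr HZ. ring. Qed.
Lemma gc_XH3 t x : continuity_2d_pt XH3 t x.
Proof. apply glob_c2; clear t x.
  - intros t x Ht. unfold XH3. c2go2.
  - intros t x HZ. unfold XH3, H3t, H3x, H1t, H1x, H2t, H2x, Kf, Kg, dtKf, dtKg, dxKf, dxKg, u2. zr HZ. ring. Qed.
Lemma gc_Rt t x : continuity_2d_pt Rt t x.
Proof. apply glob_c2; clear t x.
  - intros t x Ht. unfold Rt. c2go2.
  - intros t x HZ. unfold Rt, DI, al_g, al_f, be_g, be_f, AS, KXf, KXg, ErrI, u2,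
      H3t, H3x, H1t, H1x, H2t, H2x, Kf, Kg, dtKf, dtKg, dxKf, dxKg. unfold u2. zr HZ. unfold Tf. unfold FF, GG. zr HZ. ring. Qed.

Lemma D_sq f t l : derivable_pt_lim f t l -> derivable_pt_lim (fun s => f s ^ 2) t (2 * f t * l).
Proof. intros H. eapply D_ext; [| | exact (D_mult _ _ t _ _ H H)]. intros; simpl; ring. ring. Qed.

Lemma d_ct t0 : 0 < t0 < 1 -> derivable_pt_lim ct t0 (ct' t0).
Proof. intros H. unfold ct, ct'. apply D_scal. apply HPhi; auto. Qed.
Lemma d_lam_t t0 x : 0 < t0 < 1 -> derivable_pt_lim (fun t => lam a (st t) x) t0 (a * ct t0).
Proof. intros H. unfold lam. apply D_scal.
  apply (D_ext (fun t => x + st t) _ t0 (0 + ct t0)); [intros; ring|ring|].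
  apply D_plus. apply D_const. apply st_deriv; auto. Qed.
Lemma d_W_t t0 x : 0 < t0 < 1 -> derivable_pt_lim (fun t => W t x) t0 (W t0 x * (2 * lam a (st t0) x * ct t0)).
Proof. intros H. unfold W, wt, lam. apply (D_exp (fun t => a * (x + st t) ^ 2)).
  eapply D_ext; [| | apply D_scal; apply D_sq; apply D_plus; [apply D_const| apply st_deriv; auto]].
  intros; reflexivity. cbv beta. ring. Qed.
Lemma d_U_t i j t0 x : derivable_pt_lim (fun t => Ur i j t x) t0 (Ur (S i) j t0 x).
Proof. apply (proj1 HUr). Qed.
Lemma d_V_t i j t0 x : derivable_pt_lim (fun t => Ui i j t x) t0 (Ui (S i) j t0 x).
Proof. apply (proj1 HUi). Qed.
Lemma d_U_x i j t x0 : derivable_pt_lim (fun x => Ur i j t x) x0 (Ur i (S j) t x0).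
Proof. apply (proj1 (proj2 HUr)). Qed.
Lemma d_V_x i j t x0 : derivable_pt_lim (fun x => Ui i j t x) x0 (Ui i (S j) t x0).
Proof. apply (proj1 (proj2 HUi)). Qed.
Lemma d_W_x t x0 : derivable_pt_lim (fun x => W t x) x0 (W t x0 * (2 * lam a (st t) x0)).
Proof. apply wt_deriv. Qed.
Lemma d_lam_x t x0 : derivable_pt_lim (fun x => lam a (st t) x) x0 a.
Proof. apply lam_deriv. Qed.
Lemma d_TpFF_t t0 x k j : 0 < t0 < 1 -> derivable_pt_lim (fun t => Tp a (st t) k (FF t) j x) t0
  (Tp a (st t0) k (XF t0) j x + ct t0 * Tp a (st t0) k (FF t0) (S j) x).
Proof. intros H. apply (TpX FF XF t0 H). intros j' x'. unfold FF, XF.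
  eapply D_ext; [| | apply d_U_t]. intros; reflexivity. ring. Qed.
Lemma d_TpGG_t t0 x k j : 0 < t0 < 1 -> derivable_pt_lim (fun t => Tp a (st t) k (GG t) j x) t0
  (Tp a (st t0) k (XG t0) j x + ct t0 * Tp a (st t0) k (GG t0) (S j) x).
Proof. intros H. apply (TpX GG XG t0 H). intros j' x'. unfold GG, XG.
  eapply D_ext; [| | apply d_V_t]. intros; reflexivity. ring. Qed.
Lemma d_TpFF_x t x0 k j : derivable_pt_lim (fun x => Tp a (st t) k (FF t) j x) x0 (Tp a (st t) k (FF t) (S j) x0).
Proof. apply (Good_Tp a (st t) K rr k (FF t) (Good_FF t)). Qed.
Lemma d_TpGG_x t x0 k j : derivable_pt_lim (fun x => Tp a (st t) k (GG t) j x) x0 (Tp a (st t) k (GG t) (S j) x0).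
Proof. apply (Good_Tp a (st t) K rr k (GG t) (Good_GG t)). Qed.

Lemma dH1_t t0 x : 0 < t0 < 1 -> derivable_pt_lim (fun t => H1 t x) t0 (H1t t0 x).
Proof. intros H.
  assert (A := D_mult _ _ t0 _ _ (d_ct t0 H) (d_lam_t t0 x H)).
  assert (B := D_mult _ _ t0 _ _ A (d_W_t t0 x H)).
  assert (C := D_plus _ _ t0 _ _ (D_sq _ _ _ (d_U_t 0 0 t0 x)) (D_sq _ _ _ (d_V_t 0 0 t0 x))).
  assert (D := D_mult _ _ t0 _ _ B C).
  eapply D_ext; [| | exact D]. intros; unfold H1, u2; reflexivity. unfold H1t, u2. ring. Qed.
Lemma dH1_x t x0 : derivable_pt_lim (fun x => H1 t x) x0 (H1x t x0).
Proof.
  assert (A := D_mult _ _ x0 _ _ (D_const (ct t) x0) (d_lam_x t x0)).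
  assert (B := D_mult _ _ x0 _ _ A (d_W_x t x0)).
  assert (C := D_plus _ _ x0 _ _ (D_sq _ _ _ (d_U_x 0 0 t x0)) (D_sq _ _ _ (d_V_x 0 0 t x0))).
  assert (D := D_mult _ _ x0 _ _ B C).
  eapply D_ext; [| | exact D]. intros; unfold H1, u2; reflexivity. unfold H1x, u2. ring. Qed.

Lemma dKf_t t0 x : 0 < t0 < 1 -> derivable_pt_lim (fun t => Kf t x) t0 (dtKf t0 x).
Proof. intros H. unfold Kf, dtKf. apply D_minus. apply d_U_t. apply d_TpFF_t; auto. Qed.
Lemma dKg_t t0 x : 0 < t0 < 1 -> derivable_pt_lim (fun t => Kg t x) t0 (dtKg t0 x).
Proof. intros H. unfold Kg, dtKg. apply D_minus. apply d_V_t. apply d_TpGG_t; auto. Qed.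
Lemma dKf_x t x0 : derivable_pt_lim (fun x => Kf t x) x0 (dxKf t x0).
Proof. unfold Kf, dxKf. apply D_minus. apply d_U_x. apply d_TpFF_x. Qed.
Lemma dKg_x t x0 : derivable_pt_lim (fun x => Kg t x) x0 (dxKg t x0).
Proof. unfold Kg, dxKg. apply D_minus. apply d_V_x. apply d_TpGG_x. Qed.

Lemma dH2_t t0 x : 0 < t0 < 1 -> derivable_pt_lim (fun t => H2 t x) t0 (H2t t0 x).
Proof. intros H.
  assert (A := D_minus _ _ t0 _ _ (D_mult _ _ t0 _ _ (d_V_t 0 0 t0 x) (dKf_t t0 x H)) (D_mult _ _ t0 _ _ (d_U_t 0 0 t0 x) (dKg_t t0 x H))).
  assert (D := D_mult _ _ t0 _ _ (d_W_t t0 x H) A).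
  eapply D_ext; [| | exact D]. intros; unfold H2; reflexivity. unfold H2t. ring. Qed.
Lemma dH2_x t x0 : derivable_pt_lim (fun x => H2 t x) x0 (H2x t x0).
Proof.
  assert (A := D_minus _ _ x0 _ _ (D_mult _ _ x0 _ _ (d_V_x 0 0 t x0) (dKf_x t x0)) (D_mult _ _ x0 _ _ (d_U_x 0 0 t x0) (dKg_x t x0))).
  assert (D := D_mult _ _ x0 _ _ (d_W_x t x0) A).
  eapply D_ext; [| | exact D]. intros; unfold H2; reflexivity. unfold H2x. ring. Qed.

Lemma dH3_t t x : derivable_pt_lim (fun t => H3 t x) t (H3t t x).
Proof. revert t x. apply glob_deriv.
  - intros t x H. unfold H3, H3t. apply D_plus; apply D_scal. apply dH1_t; auto. apply dH2_t; auto.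
  - intros t x HZ. unfold H3, H3t, H1, H1t, H2, H2t, Kf, Kg, dtKf, dtKg, u2. zr HZ. split; ring. Qed.
Lemma dH3_x t x : derivable_pt_lim (H3 t) x (H3x t x).
Proof. unfold H3, H3x. apply (D_plus (fun x => -2 * H1 t x) (fun x => sg * H2 t x)); apply D_scal.
  apply dH1_x. apply dH2_x. Qed.

Lemma XH3_int : RInt (fun t => RInt (fun x => H3t t x - ct t * H3x t x) (-K) K) 0 1 = 0.
Proof. apply (X_ibp H3 H3t H3x ct K HK dH3_t dH3_x gc_H3t gc_H3x).
  - intros t x Hx. assert (HZ := Zr_x t x Hx). unfold H3, H1, H2, Kf, Kg, u2. zr HZ. ring.
  - intros x. assert (HZ := Zr_t 0 x (or_introl Ha0)). unfold H3, H1, H2, Kf, Kg, u2. zr HZ. ring.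
  - intros x. assert (HZ := Zr_t 1 x (or_intror Hb0)). unfold H3, H1, H2, Kf, Kg, u2. zr HZ. ring.
Qed.

Lemma sg2 : sg ^ 2 = 1.
Proof. unfold sg. rewrite <- pow_mult. rewrite Nat.mul_comm. rewrite pow_mult.
  replace ((-1) ^ 2) with 1 by ring. apply pow1. Qed.
Lemma nn_even : (-1) ^ nn = 1.
Proof. unfold nn. rewrite pow_mult. replace ((-1) ^ 2) with 1 by ring. apply pow1. Qed.

Lemma P2 t : RInt (DI t) (-K) K = Delta a (st t) K (ct t) sg nn (FF t) (GG t).
Proof. unfold Delta.
  assert (G1 := Good_FF t). assert (G2 := Good_GG t).
  rewrite <- (ip4 a (st t) K rr); try (unfold alpha, beta; repeat first [apply Good_Tf | apply Good_Tp | apply Good_Sh | apply Good_Shn | apply Good_add | apply Good_scal]; auto).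
  apply RInt_ext'. intros x _. unfold DI, W, al_g, be_g, al_f, be_f, alpha, beta, Fadd, Fscal, Sh.
  rewrite !Shn_eq. rewrite Nat.add_0_r. unfold FF, GG. simpl pow. ring.
Qed.

Lemma P3 t : RInt (AS t) (-K) K = 0.
Proof.
  assert (G1 := Good_FF t). assert (G2 := Good_GG t). assert (G3 := Good_XF t). assert (G4 := Good_XG t).
  assert (E : RInt (AS t) (-K) K =
    ip a (st t) K (XG t) (Kfam a (st t) nn (FF t)) - ip a (st t) K (XF t) (Kfam a (st t) nn (GG t))
    - ip a (st t) K (GG t) (Kfam a (st t) nn (XF t)) + ip a (st t) K (FF t) (Kfam a (st t) nn (XG t))).
  { unfold ip. rewrite <- RInt_minus', <- RInt_minus', <- RInt_plus'.
    apply RInt_ext'. intros x _. unfold AS, W, Kfam, Fadd, Fscal, Kf, Kg, KXf, KXg. rewrite !Shn_eq, Nat.add_0_r.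
    unfold FF, GG. ring.
    all: assert (e1 := ip_ex2 a (st t) K rr _ _ G4 (Good_Kfam a (st t) K rr nn _ G1)).
    all: assert (e2 := ip_ex2 a (st t) K rr _ _ G3 (Good_Kfam a (st t) K rr nn _ G2)).
    all: assert (e3 := ip_ex2 a (st t) K rr _ _ G2 (Good_Kfam a (st t) K rr nn _ G3)).
    all: assert (e4 := ip_ex2 a (st t) K rr _ _ G1 (Good_Kfam a (st t) K rr nn _ G4)).
    all: assert (e12 := ex_RInt_minus _ _ _ _ e1 e2).
    all: assert (e123 := ex_RInt_minus _ _ _ _ e12 e3).
    all: first [exact e1 | exact e2 | exact e3 | exact e4 | exact e12 | exact e123]. }
  rewrite E. rewrite (antisym a (st t) K rr nn (GG t) (XF t) HK nn_even G2 G3).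
  rewrite (antisym a (st t) K rr nn (FF t) (XG t) HK nn_even G1 G4). match goal with |- ?l = ?r => change (@eq R l r) end. ring.
Qed.

Lemma gc_DI t x : continuity_2d_pt DI t x.
Proof. apply glob_c2; clear t x.
  - intros t x Ht. unfold DI, al_g, al_f, be_g, be_f. c2go2.
  - intros t x HZ. unfold DI, al_g, al_f, be_g, be_f. zr HZ. unfold Tf, FF, GG. zr HZ. ring. Qed.
Lemma gc_AS t x : continuity_2d_pt AS t x.
Proof. apply glob_c2; clear t x.
  - intros t x Ht. unfold AS, Kf, Kg, KXf, KXg. c2go2.
  - intros t x HZ. unfold AS, Kf, Kg, KXf, KXg. zr HZ. ring. Qed.

Variable M2 : R.
Hypothesis HM2 : forall t, 0 < t < 1 -> Rabs (Phi 2%nat t) <= M2.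
Hypothesis Hrho : 0 <= a ^ 2 * rr ^ 2 - a.
Hypothesis Hrho2 : forall t, 0 < t < 1 -> (a ^ 2 * rr ^ 2 - a) ^ (pred nn) >= 4 * ct t ^ 2.

Definition Ce := 2 * (Rr * M2) * (a * (Rr * d2)).

Lemma exI F t : (forall t x, continuity_2d_pt F t x) -> ex_RInt (F t) (-K) K.
Proof. intros H. apply cts_exRInt. intros x. apply c2_x. auto. Qed.

Lemma Dbound t : 0 < t < 1 ->
  Delta a (st t) K (ct t) sg nn (FF t) (GG t) >= a / 2 * (a ^ 2 * rr ^ 2 - a) ^ (pred nn) * RInt (Nu t) (-K) K.
Proof. intros Ht.
  assert (Hn : nn = S (pred nn)) by (unfold nn; lia).
  assert (E : RInt (Nu t) (-K) K = ip a (st t) K (FF t) (FF t) + ip a (st t) K (GG t) (GG t)).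
  { unfold ip. rewrite <- RInt_plus'. apply RInt_ext'. intros x _. unfold Nu, W, u2, FF, GG. simpl. ring.
    apply (ip_ex a (st t) K rr); apply Good_FF. apply (ip_ex a (st t) K rr); apply Good_GG. }
  rewrite E. rewrite Hn at 1.
  apply (Delta_ge a (st t) K rr (ct t) sg (pred nn) (FF t) (GG t)); auto.
  unfold rr; nra. apply sg2. rewrite <- Hn. apply nn_even. apply Good_FF. apply Good_GG.
Qed.

Lemma Ebound t x : 0 < t < 1 -> ErrI t x >= - Ce * Nu t x.
Proof. intros Ht. unfold ErrI, Ce, Nu.
  assert (HW : 0 < W t x) by apply wt_pos.
  assert (Hu : 0 <= u2 t x) by (unfold u2; apply Rplus_le_le_0_compat; apply pow2_ge_0).
  destruct (Req_dec (Ur 0 0 t x) 0) as [E1|E1]; [destruct (Req_dec (Ui 0 0 t x) 0) as [E2|E2]|].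
  - unfold u2. rewrite E1, E2. replace (0 ^ 2 + 0 ^ 2) with 0 by ring. lra.
  - destruct (Hsupp 0 0 t x (or_intror E2)) as [_ [_ Hs]].
    assert (Hl : Rabs (lam a (st t) x) <= a * (Rr * d2)).
    { unfold lam, st. rewrite Rabs_mult, (Rabs_right a) by lra. apply Rmult_le_compat_l; lra. }
    assert (Hc : Rabs (ct' t) <= Rr * M2). { unfold ct'. rewrite Rabs_mult, (Rabs_right Rr) by lra.
      apply Rmult_le_compat_l; [lra|]. apply HM2; auto. }
    assert (Hp : Rabs (ct' t * lam a (st t) x) <= Rr * M2 * (a * (Rr * d2))).
    { rewrite Rabs_mult. apply Rmult_le_compat; auto using Rabs_pos. }
    apply Rabs_le_inv2 in Hp. assert (0 <= W t x * u2 t x) by (apply Rmult_le_pos; lra). nra.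
  - destruct (Hsupp 0 0 t x (or_introl E1)) as [_ [_ Hs]].
    assert (Hl : Rabs (lam a (st t) x) <= a * (Rr * d2)).
    { unfold lam, st. rewrite Rabs_mult, (Rabs_right a) by lra. apply Rmult_le_compat_l; lra. }
    assert (Hc : Rabs (ct' t) <= Rr * M2). { unfold ct'. rewrite Rabs_mult, (Rabs_right Rr) by lra.
      apply Rmult_le_compat_l; [lra|]. apply HM2; auto. }
    assert (Hp : Rabs (ct' t * lam a (st t) x) <= Rr * M2 * (a * (Rr * d2))).
    { rewrite Rabs_mult. apply Rmult_le_compat; auto using Rabs_pos. }
    apply Rabs_le_inv2 in Hp. assert (0 <= W t x * u2 t x) by (apply Rmult_le_pos; lra). nra.
Qed.

Lemma exO F : (forall t x, continuity_2d_pt F t x) -> ex_RInt (fun t => RInt (F t) (-K) K) 0 1.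
Proof. intros H. apply cts_exRInt. intros t. apply (Icont F K HK H). Qed.

Lemma inner_Rt t : RInt (Rt t) (-K) K =
  Delta a (st t) K (ct t) sg nn (FF t) (GG t) + RInt (XH3 t) (-K) K + RInt (ErrI t) (-K) K.
Proof.
  rewrite <- P2. 
  assert (E : RInt (Rt t) (-K) K = RInt (DI t) (-K) K + RInt (XH3 t) (-K) K + RInt (ErrI t) (-K) K + sg * RInt (AS t) (-K) K).
  { assert (e1 := exI DI t gc_DI). assert (e2 := exI XH3 t gc_XH3).
    assert (e3 := exI ErrI t gc_ErrI). assert (e4 := exI AS t gc_AS).
    assert (e12 := ex_RInt_plus _ _ _ _ e1 e2). assert (e123 := ex_RInt_plus _ _ _ _ e12 e3).
    assert (e4' := ex_RInt_scal _ _ _ sg e4).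
    rewrite <- (RInt_scal' _ _ _ _ e4). rewrite <- (RInt_plus' (DI t) (XH3 t) _ _ e1 e2), <- (RInt_plus' (fun x => DI t x + XH3 t x) (ErrI t) _ _ e12 e3),
      <- (RInt_plus' (fun x => DI t x + XH3 t x + ErrI t x) (fun x => sg * AS t x) _ _ e123 e4').
    apply RInt_ext'. intros x _. unfold Rt, XH3. ring. }
  rewrite E, P3. match goal with |- ?l = ?r => change (@eq R l r) end. ring.
Qed.

Lemma main_sec : RInt (fun t => RInt (Ef t) (-K) K) 0 1 >=
  (a / 2 * (a ^ 2 * rr ^ 2 - a) ^ (pred nn) - Ce) * RInt (fun t => RInt (Nu t) (-K) K) 0 1.
Proof.
  set (rho := a ^ 2 * rr ^ 2 - a).
  assert (S1 : RInt (fun t => RInt (Ef t) (-K) K) 0 1 >= RInt (fun t => RInt (Rt t) (-K) K) 0 1).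
  { apply Rle_ge. apply RInt_le. lra. apply exO; apply gc_Rt. apply exO; apply gc_Ef.
    intros t _. apply RInt_le. lra. apply exI; apply gc_Rt. apply exI; apply gc_Ef.
    intros x _. apply Rge_le. apply P1. }
  set (IR := fun t => RInt (Rt t) (-K) K). set (IX := fun t => RInt (XH3 t) (-K) K).
  set (IE := fun t => RInt (ErrI t) (-K) K). set (IN := fun t => RInt (Nu t) (-K) K).
  assert (eR : ex_RInt IR 0 1) by (apply exO; apply gc_Rt).
  assert (eX : ex_RInt IX 0 1) by (apply exO; apply gc_XH3).
  assert (eE : ex_RInt IE 0 1) by (apply exO; apply gc_ErrI).
  assert (eN : ex_RInt IN 0 1) by (apply exO; apply gc_Nu).
  assert (eD : ex_RInt (fun t => IR t - IX t - IE t) 0 1).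
  { apply (ex_RInt_minus (V:=R_CompleteNormedModule)); auto. apply (ex_RInt_minus (V:=R_CompleteNormedModule)); auto. }
  assert (S2 : RInt IR 0 1 = RInt (fun t => IR t - IX t - IE t) 0 1 + RInt IX 0 1 + RInt IE 0 1).
  { rewrite <- RInt_plus', <- RInt_plus'; auto. apply RInt_ext'. intros. apply req5.
    apply (ex_RInt_plus (V:=R_CompleteNormedModule)); auto. }
  assert (S3 : RInt IX 0 1 = 0).
  { transitivity (RInt (fun t => RInt (fun x => H3t t x - ct t * H3x t x) (-K) K) 0 1).
    apply RInt_ext'; intros; reflexivity. apply XH3_int. }
  assert (S4 : RInt (fun t => IR t - IX t - IE t) 0 1 >= a / 2 * rho ^ (pred nn) * RInt IN 0 1).
  { rewrite <- RInt_scal'; auto. apply Rle_ge. apply RInt_le. lra.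
    apply (ex_RInt_scal (V:=R_CompleteNormedModule)); auto. auto.
    intros t Ht. unfold IR, IX, IE, IN. rewrite inner_Rt. apply Rge_le.
    replace (Delta a (st t) K (ct t) sg nn (FF t) (GG t) + RInt (XH3 t) (- K) K + RInt (ErrI t) (- K) K -
      RInt (XH3 t) (- K) K - RInt (ErrI t) (- K) K) with (Delta a (st t) K (ct t) sg nn (FF t) (GG t)) by ring.
    apply Dbound; lra. }
  assert (S5 : RInt IE 0 1 >= - Ce * RInt IN 0 1).
  { rewrite <- RInt_scal'; auto. apply Rle_ge. apply RInt_le. lra.
    apply (ex_RInt_scal (V:=R_CompleteNormedModule)); auto. auto.
    intros t Ht. unfold IE, IN. rewrite <- RInt_scal'. apply RInt_le. lra.
    apply (ex_RInt_scal (V:=R_CompleteNormedModule)); apply exI; apply gc_Nu. apply exI; apply gc_ErrI.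
    intros x _. apply Rge_le. apply Ebound. lra. apply exI; apply gc_Nu. }
  fold IR in S1. fold IN.
  assert (H : RInt IR 0 1 >= (a / 2 * rho ^ (pred nn) - Ce) * RInt IN 0 1).
  { rewrite S2, S3. nra. }
  lra.
Qed.

End G.

Lemma within_to_dpl f t l : 0 < t < 1 -> deriv_within01 f t l -> derivable_pt_lim f t l.
Proof. intros Ht H eps He. destruct (H eps He) as [alp [Ha Hx]].
  assert (Hd : 0 < Rmin alp (Rmin t (1 - t))).
  { apply Rmin_pos. lra. apply Rmin_pos; lra. }
  exists (mkposreal _ Hd). intros h Hh0 Hh. simpl in Hh.
  assert (h1 := Rmin_l alp (Rmin t (1 - t))). assert (h2 := Rmin_r alp (Rmin t (1 - t))).
  assert (h3 := Rmin_l t (1 - t)). assert (h4 := Rmin_r t (1 - t)).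
  apply Rabs_def2 in Hh.
  specialize (Hx (t + h)). simpl in Hx. unfold R_dist in Hx.
  replace (t + h - t) with h in Hx by ring. apply Hx. split. split. lra. intro E. apply Hh0. lra.
  destruct (Rcase_abs h); [rewrite Rabs_left|rewrite Rabs_right]; lra.
Qed.

Lemma within_cont f x l : 0 <= x <= 1 -> deriv_within01 f x l ->
  forall eps, 0 < eps -> exists d, 0 < d /\ forall y, 0 <= y <= 1 -> Rabs (y - x) < d -> Rabs (f y - f x) < eps.
Proof. intros Hx H eps He. destruct (H 1 ltac:(lra)) as [alp [Ha Hy]].
  assert (Hl : 0 < Rabs l + 1) by (assert (0 <= Rabs l) by apply Rabs_pos; lra).
  exists (Rmin alp (eps / (Rabs l + 1))). split. apply Rmin_pos. lra. apply Rdiv_lt_0_compat; lra.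
  intros y Hy01 Hyx. destruct (Req_dec y x) as [E|E]. subst. rewrite Rminus_eq_0, Rabs_R0; lra.
  assert (h1 := Rmin_l alp (eps / (Rabs l + 1))). assert (h2 := Rmin_r alp (eps / (Rabs l + 1))).
  specialize (Hy y). simpl in Hy. unfold R_dist in Hy.
  assert (Hq : Rabs ((f y - f x) / (y - x) - l) < 1) by (apply Hy; split; [split; auto|]; lra).
  assert (Hq2 : Rabs ((f y - f x) / (y - x)) < Rabs l + 1).
  { assert (T := Rabs_triang ((f y - f x) / (y - x) - l) l). replace ((f y - f x) / (y - x) - l + l) with ((f y - f x) / (y - x)) in T by ring. lra. }
  assert (Hyx0 : y - x <> 0) by lra.
  replace (f y - f x) with ((f y - f x) / (y - x) * (y - x)) by (field; auto).
  rewrite Rabs_mult.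
  assert (0 < Rabs (y - x)) by (apply Rabs_pos_lt; auto).
  apply Rle_lt_trans with ((Rabs l + 1) * Rabs (y - x)).
  apply Rmult_le_compat_r; lra.
  apply Rlt_le_trans with ((Rabs l + 1) * (eps / (Rabs l + 1))).
  apply Rmult_lt_compat_l; lra. right; field; lra.
Qed.

Definition clamp t := Rmax 0 (Rmin t 1).
Lemma clamp_in t : 0 <= clamp t <= 1.
Proof. unfold clamp, Rmax, Rmin. repeat destruct Rle_dec; lra. Qed.
Lemma clamp_id t : 0 <= t <= 1 -> clamp t = t.
Proof. intros. unfold clamp, Rmax, Rmin. repeat destruct Rle_dec; lra. Qed.
Lemma clamp_lip y c : Rabs (clamp y - clamp c) <= Rabs (y - c).
Proof. unfold clamp, Rmax, Rmin. repeat destruct Rle_dec; unfold Rabs; repeat destruct Rcase_abs; lra. Qed.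

Lemma bound01 f (l : R -> R) : (forall x, 0 <= x <= 1 -> deriv_within01 f x (l x)) ->
  exists M, 0 <= M /\ forall t, 0 <= t <= 1 -> Rabs (f t) <= M.
Proof. intros H.
  assert (Hc : forall c, continuity_pt (fun t => Rabs (f (clamp t))) c).
  { intros c. apply (continuity_pt_comp (fun t => f (clamp t)) Rabs). 2: apply Rcontinuity_abs.
    intros eps He. destruct (within_cont f (clamp c) (l (clamp c)) (clamp_in c) (H _ (clamp_in c)) eps He) as [d [Hd Hd2]].
    exists d. split. lra. intros y [_ Hy]. simpl in Hy. unfold R_dist in Hy. simpl. unfold R_dist.
    apply Hd2. apply clamp_in. assert (T := clamp_lip y c). lra. }
  destruct (continuity_ab_maj _ 0 1 ltac:(lra) (fun c _ => Hc c)) as [Mx [HM _]].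
  exists (Rabs (f (clamp Mx))). split. apply Rabs_pos. intros t Ht. rewrite <- (clamp_id t Ht). apply HM. auto.
Qed.

Lemma notsupp ur ui t x : ~ in_supp ur ui t x ->
  exists eps, eps > 0 /\ forall t' x', Rabs (t' - t) < eps -> Rabs (x' - x) < eps -> ur t' x' = 0 /\ ui t' x' = 0.
Proof. intros H. unfold in_supp in H. apply not_all_ex_not in H. destruct H as [eps H].
  apply imply_to_and in H. destruct H as [He H]. exists eps. split; auto.
  intros t' x' H1 H2. destruct (Req_dec (ur t' x') 0); destruct (Req_dec (ui t' x') 0); auto;
  exfalso; apply H; exists t', x'; auto.
Qed.

Lemma zero_box (D : nat -> nat -> R -> R -> R) t x eps : smooth_family D -> eps > 0 ->
  (forall t' x', Rabs (t' - t) < eps -> Rabs (x' - x) < eps -> D 0%nat 0%nat t' x' = 0) ->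
  forall i j t' x', Rabs (t' - t) < eps -> Rabs (x' - x) < eps -> D i j t' x' = 0.
Proof. intros [Ht [Hx _]] He H0.
  assert (stepx : forall i j, (forall t' x', Rabs (t' - t) < eps -> Rabs (x' - x) < eps -> D i j t' x' = 0) ->
     forall t' x', Rabs (t' - t) < eps -> Rabs (x' - x) < eps -> D i (S j) t' x' = 0).
  { intros i j IH t' x' H1 H2. apply (uniqueness_limite (fun y => D i j t' y) x'). apply Hx.
    apply (dpl_loc0 _ x' (eps - Rabs (x' - x))). lra. intros y Hy. apply IH; auto.
    assert (T := Rabs_triang (y - x') (x' - x)). replace (y - x' + (x' - x)) with (y - x) in T by ring. lra. }
  assert (stept : forall i j, (forall t' x', Rabs (t' - t) < eps -> Rabs (x' - x) < eps -> D i j t' x' = 0) ->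
     forall t' x', Rabs (t' - t) < eps -> Rabs (x' - x) < eps -> D (S i) j t' x' = 0).
  { intros i j IH t' x' H1 H2. apply (uniqueness_limite (fun s => D i j s x') t'). apply Ht.
    apply (dpl_loc0 _ t' (eps - Rabs (t' - t))). lra. intros y Hy. apply IH; auto.
    assert (T := Rabs_triang (y - t') (t' - t)). replace (y - t' + (t' - t)) with (y - t) in T by ring. lra. }
  intros i. induction i; intros j.
  - induction j. auto. apply stepx. auto.
  - apply stept. auto.
Qed.


Lemma pexp_pos m : (1 <= m)%nat -> 0 < pexp m.
Proof. intros Hm. unfold pexp. apply le_INR in Hm. simpl in Hm. apply Rdiv_lt_0_compat; lra. Qed.

Lemma P_ge1 R p : 1 <= R -> 0 < p -> 1 <= Rpower R p.
Proof. intros HR Hp. unfold Rpower. rewrite <- exp_0.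
  destruct (Req_dec (p * ln R) 0) as [E|E]. rewrite E; lra.
  left. apply exp_increasing. assert (0 <= ln R). { rewrite <- ln_1. destruct (Req_dec R 1). subst; lra.
    left; apply ln_increasing; lra. } nra. Qed.

Lemma P_pow R m : 0 < R -> (1 <= m)%nat ->
  Rpower R (pexp m) ^ (2 * (2 * m - 1)) = R ^ (2 * (2 * m - 1) + 2).
Proof. intros HR Hm.
  assert (Hp : 0 < Rpower R (pexp m)) by (unfold Rpower; apply exp_pos).
  rewrite <- (Rpower_pow _ _ Hp). rewrite Rpower_mult. rewrite <- Rpower_pow by auto.
  f_equal. unfold pexp. rewrite plus_INR, !mult_INR, minus_INR by lia.
  assert (I2 : INR 2 = 2) by (simpl; ring). assert (I1 : INR 1 = 1) by reflexivity. rewrite I2, I1.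
  apply le_INR in Hm. rewrite I1 in Hm. rewrite mult_INR, I2. field. lra.
Qed.

Lemma pow_ge_base x n : 1 <= x -> (1 <= n)%nat -> x <= x ^ n.
Proof. intros Hx Hn. rewrite <- (pow_1 x) at 1. apply Rle_pow; auto. Qed.

Lemma constants (g R d1 d2 M1 M2 : R) (m : nat) :
  (1 <= m)%nat -> 0 < d1 -> d1 <= d2 -> 0 <= M1 -> 0 <= M2 -> 1 <= R ->
  let k := (2 * m - 1)%nat in let KK := (2 * d1 ^ 2) ^ k in
  g >= 1 + 1 / d1 ^ 2 + 8 * M2 * d2 / KK + 4 * M1 ^ 2 / KK ->
  let P := Rpower R (pexp m) in let a := 2 * g * P / R ^ 2 in
  0 < a /\ 0 <= a ^ 2 * (R * d1) ^ 2 - a /\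
  (a ^ 2 * (R * d1) ^ 2 - a) ^ k >= 4 * (R * M1) ^ 2 /\
  a / 2 * (a ^ 2 * (R * d1) ^ 2 - a) ^ k - 2 * (R * M2) * (a * (R * d2)) >= KK / 2 * g ^ (4 * m - 1) * P.
Proof. intros Hm Hd1 Hd12 HM1 HM2 HR k KK Hg P a.
  assert (HKK : 0 < KK) by (unfold KK; apply pow_lt; nra).
  assert (HP : 1 <= P) by (apply P_ge1; auto; apply pexp_pos; auto).
  assert (Hk : (1 <= k)%nat) by (unfold k; lia).
  assert (t1 : 0 <= 1 / d1 ^ 2) by (apply Rlt_le, Rdiv_lt_0_compat; [lra| apply pow_lt; lra]).
  assert (t2 : 0 <= 8 * M2 * d2 / KK) by (apply Rmult_le_pos; [nra| apply Rlt_le, Rinv_0_lt_compat; lra]).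
  assert (t3 : 0 <= 4 * M1 ^ 2 / KK) by (apply Rmult_le_pos; [nra| apply Rlt_le, Rinv_0_lt_compat; lra]).
  assert (Hg1 : 1 <= g) by lra.
  assert (Hgd : 1 <= g * d1 ^ 2).
  { assert (1 / d1 ^ 2 <= g) by lra. apply Rmult_le_compat_r with (r := d1 ^ 2) in H. 2: nra.
    replace (1 / d1 ^ 2 * d1 ^ 2) with 1 in H by (field; lra). lra. }
  assert (Hg2 : 8 * M2 * d2 <= g * KK).
  { assert (8 * M2 * d2 / KK <= g) by lra. apply Rmult_le_compat_r with (r := KK) in H. 2: lra.
    replace (8 * M2 * d2 / KK * KK) with (8 * M2 * d2) in H by (field; lra). lra. }
  assert (Hg3 : 4 * M1 ^ 2 <= g * KK).
  { assert (4 * M1 ^ 2 / KK <= g) by lra. apply Rmult_le_compat_r with (r := KK) in H. 2: lra.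
    replace (4 * M1 ^ 2 / KK * KK) with (4 * M1 ^ 2) in H by (field; lra). lra. }
  assert (HR0 : 0 < R) by lra. assert (HR2 : 0 < R ^ 2) by (apply pow_lt; lra).
  assert (Ha : 0 < a) by (unfold a; apply Rdiv_lt_0_compat; nra).
  set (B := 2 * g ^ 2 * d1 ^ 2 * (P ^ 2 / R ^ 2)).
  assert (HB0 : 0 <= B). { unfold B. apply Rmult_le_pos. nra. apply Rlt_le, Rdiv_lt_0_compat; nra. }
  assert (HrB : B <= a ^ 2 * (R * d1) ^ 2 - a).
  { assert (E : a ^ 2 * (R * d1) ^ 2 - a - B = 2 * g * P / R ^ 2 * (g * d1 ^ 2 * P - 1)) by (unfold a, B; field; lra).
    assert (0 <= 2 * g * P / R ^ 2 * (g * d1 ^ 2 * P - 1)).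
    { apply Rmult_le_pos. apply Rlt_le, Rdiv_lt_0_compat; nra.
      assert (g * d1 ^ 2 * P >= 1 * 1) by (apply Rle_ge, Rmult_le_compat; lra). lra. }
    lra. }
  assert (HBk : B ^ k = KK * g ^ (2 * k) * R ^ 2).
  { unfold B, KK. rewrite !Rpow_mult_distr. unfold Rdiv. rewrite Rpow_mult_distr.
    rewrite pow_inv. rewrite <- !pow_mult. rewrite (Nat.mul_comm 2 k).
    replace (P ^ (k * 2)) with (R ^ (2 * k + 2)).
    rewrite pow_add. rewrite (Nat.mul_comm k 2). field. apply pow_nonzero; lra.
    unfold P. symmetry. unfold k. replace ((2 * m - 1) * 2)%nat with (2 * (2 * m - 1))%nat by lia. apply P_pow; auto. }
  assert (Hgk : g <= g ^ (2 * k)) by (apply pow_ge_base; auto; lia).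
  assert (Hrk : (a ^ 2 * (R * d1) ^ 2 - a) ^ k >= KK * g ^ (2 * k) * R ^ 2).
  { rewrite <- HBk. apply Rle_ge, pow_incr. lra. }
  split; [auto|split;[lra|split]].
  - assert (KK * g ^ (2 * k) * R ^ 2 >= 4 * (R * M1) ^ 2).
    { replace (4 * (R * M1) ^ 2) with (4 * M1 ^ 2 * R ^ 2) by ring. apply Rle_ge, Rmult_le_compat_r. lra.
      assert (KK * g <= KK * g ^ (2 * k)) by (apply Rmult_le_compat_l; lra). lra. }
    lra.
  - assert (E1 : 2 * (R * M2) * (a * (R * d2)) = 4 * g * P * M2 * d2) by (unfold a; field; lra).
    assert (E2 : (4 * m - 1 = 2 * k + 1)%nat) by (unfold k; lia).
    rewrite E1, E2. rewrite pow_add, pow_1.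
    assert (a / 2 * (a ^ 2 * (R * d1) ^ 2 - a) ^ k >= a / 2 * (KK * g ^ (2 * k) * R ^ 2)).
    { apply Rle_ge, Rmult_le_compat_l. lra. lra. }
    assert (E3 : a / 2 * (KK * g ^ (2 * k) * R ^ 2) = KK * (g ^ (2 * k) * g) * P) by (unfold a; field; lra).
    assert (8 * M2 * d2 <= KK * g ^ (2 * k)).
    { assert (KK * g <= KK * g ^ (2 * k)) by (apply Rmult_le_compat_l; lra). lra. }
    assert (0 <= g * P) by nra.
    assert (4 * g * P * M2 * d2 <= KK / 2 * (g ^ (2 * k) * g) * P).
    { replace (4 * g * P * M2 * d2) with ((g * P) * (8 * M2 * d2) / 2) by field.
      replace (KK / 2 * (g ^ (2 * k) * g) * P) with ((g * P) * (KK * g ^ (2 * k)) / 2) by field.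
      apply Rmult_le_compat_r. lra. apply Rmult_le_compat_l; lra. }
    lra.
Qed.

Theorem lemma2p6 (m : nat) (phi : R -> R) (d1 d2 : R) :
  (1 <= m)%nat -> smooth01 phi -> 0 < d1 -> d1 <= d2 ->
  exists g0 R0 C, 0 < g0 /\ 0 < R0 /\ 0 < C /\
    forall (g Rr : R), g0 <= g -> R0 <= Rr ->
    forall (Ur Ui : nat -> nat -> R -> R -> R),
      smooth_family Ur -> smooth_family Ui ->
      compact_supp_strip (Ur 0%nat 0%nat) (Ui 0%nat 0%nat) ->
      (forall t x, in_supp (Ur 0%nat 0%nat) (Ui 0%nat 0%nat) t x ->
         d1 <= Rabs (x / Rr + phi t) <= d2) ->
      iint (fun t x => exp (Qw m phi g Rr t x) *
              (Pu_re m Ur Ui t x ^ 2 + Pu_im m Ur Ui t x ^ 2))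
      >= C * g ^ (4 * m - 1) * Rpower Rr (pexp m) *
         iint (fun t x => exp (Qw m phi g Rr t x) *
              (Ur 0%nat 0%nat t x ^ 2 + Ui 0%nat 0%nat t x ^ 2)).
Proof.
  intros Hm [D [HD0 HDd]] Hd1 Hd12.
  assert (HPhi : forall n t, 0 < t < 1 -> derivable_pt_lim (D n) t (D (S n) t)).
  { intros n t Ht. apply within_to_dpl; auto. apply HDd. lra. }
  destruct (bound01 (D 1%nat) (D 2%nat) (fun x Hx => HDd 1%nat x Hx)) as [M1 [HM1 HM1b]].
  destruct (bound01 (D 2%nat) (D 3%nat) (fun x Hx => HDd 2%nat x Hx)) as [M2 [HM2 HM2b]].
  set (k := (2 * m - 1)%nat). set (KK := (2 * d1 ^ 2) ^ k).
  assert (HKK : 0 < KK) by (unfold KK; apply pow_lt; nra).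
  set (g0 := 1 + 1 / d1 ^ 2 + 8 * M2 * d2 / KK + 4 * M1 ^ 2 / KK).
  assert (t1 : 0 <= 1 / d1 ^ 2) by (apply Rlt_le, Rdiv_lt_0_compat; [lra| apply pow_lt; lra]).
  assert (t2 : 0 <= 8 * M2 * d2 / KK) by (apply Rmult_le_pos; [nra| apply Rlt_le, Rinv_0_lt_compat; lra]).
  assert (t3 : 0 <= 4 * M1 ^ 2 / KK) by (apply Rmult_le_pos; [nra| apply Rlt_le, Rinv_0_lt_compat; lra]).
  exists g0, 1, (KK / 2). split; [unfold g0; lra|split; [lra|split; [lra|]]].
  intros g Rr Hg HR Ur Ui HUr HUi [a0 [b0 [L [Ha0 [Hb0 HL]]]]] Hin.
  destruct (constants g Rr d1 d2 M1 M2 m Hm Hd1 Hd12 HM1 HM2 HR ltac:(unfold g0, KK, k in Hg; lra))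
    as [Ha [Hrho [Hrho2 Hfin]]].
  change (2 * m - 1)%nat with k in Hrho2, Hfin. change ((2 * d1 ^ 2) ^ k) with KK in Hfin.
  set (P := Rpower Rr (pexp m)) in *. set (a := 2 * g * P / Rr ^ 2) in *.
  set (K := Rabs L + 1).
  assert (HK : 0 < K) by (unfold K; assert (0 <= Rabs L) by apply Rabs_pos; lra).
  assert (HR0 : 0 < Rr) by lra.
  assert (Hsupp : forall i j t x, (Ur i j t x <> 0 \/ Ui i j t x <> 0) ->
     a0 <= t <= b0 /\ Rabs x < K /\ Rr * d1 <= Rabs (x + Rr * D 0%nat t) <= Rr * d2).
  { intros i j t x Hnz. destruct (classic (in_supp (Ur 0%nat 0%nat) (Ui 0%nat 0%nat) t x)) as [Hs|Hs].
    - destruct (HL t x Hs) as [Ht Hx]. split; auto. split. unfold K. assert (Rabs L >= L) by (apply Rle_ge, RRle_abs). lra.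
      assert (E : x + Rr * D 0%nat t = Rr * (x / Rr + phi t)). { rewrite HD0 by lra. field. lra. }
      rewrite E, Rabs_mult, (Rabs_right Rr) by lra. specialize (Hin t x Hs).
      split; apply Rmult_le_compat_l; lra.
    - exfalso. destruct (notsupp _ _ t x Hs) as [eps [He Hbox]].
      assert (Z1 := zero_box Ur t x eps HUr He (fun t' x' h1 h2 => proj1 (Hbox t' x' h1 h2)) i j t x).
      assert (Z2 := zero_box Ui t x eps HUi He (fun t' x' h1 h2 => proj2 (Hbox t' x' h1 h2)) i j t x).
      rewrite !Rminus_eq_0, !Rabs_R0 in Z1, Z2. destruct Hnz as [N|N]; apply N; [apply Z1|apply Z2]; lra. }
  assert (HM2' : forall t, 0 < t < 1 -> Rabs (D 2%nat t) <= M2) by (intros; apply HM2b; lra).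
  assert (Hrho2' : forall t, 0 < t < 1 -> (a ^ 2 * rr Rr d1 ^ 2 - a) ^ pred (nn m) >= 4 * ct D Rr t ^ 2).
  { intros t Ht. unfold rr, ct, nn. replace (pred (2 * m)) with k by (unfold k; lia).
    assert (Rabs (D 1%nat t) <= M1) by (apply HM1b; lra).
    assert (4 * (Rr * D 1%nat t) ^ 2 <= 4 * (Rr * M1) ^ 2).
    { apply Rmult_le_compat_l. lra. rewrite !Rpow_mult_distr. apply Rmult_le_compat_l. nra.
      rewrite <- (pow2_abs (D 1%nat t)). apply pow_incr. split. apply Rabs_pos. auto. }
    lra. }
  assert (Main := main_sec Ur Ui D a Rr K a0 b0 d1 d2 HUr HUi HPhi Ha HR0 HK Ha0 Hb0 Hd1 Hsupp m Hm M2 HM2' Hrho Hrho2').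
  assert (EL : (fun t x => exp (Qw m phi g Rr t x) * (Pu_re m Ur Ui t x ^ 2 + Pu_im m Ur Ui t x ^ 2)) = Ef Ur Ui D a Rr m).
  { apply functional_extensionality; intros t; apply functional_extensionality; intros x.
    unfold Ef, W, wt, st, Pu_re, Pu_im, sg, nn.
    destruct (classic (a0 <= t <= b0)) as [Ht|Ht].
    - f_equal. f_equal. unfold Qw. fold P. rewrite HD0 by lra. unfold a. field. lra.
    - assert (Htt : t < a0 \/ b0 < t) by lra.
      assert (HZ := Zr_t Ur Ui D Rr K a0 b0 d1 d2 Hsupp t x Htt).
      repeat first [rewrite (proj1 (HZ _ _)) | rewrite (proj2 (HZ _ _))]. ring. }
  assert (ER : (fun t x => exp (Qw m phi g Rr t x) * (Ur 0%nat 0%nat t x ^ 2 + Ui 0%nat 0%nat t x ^ 2)) = Nu Ur Ui D a Rr).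
  { apply functional_extensionality; intros t; apply functional_extensionality; intros x.
    unfold Nu, u2, W, wt, st.
    destruct (classic (a0 <= t <= b0)) as [Ht|Ht].
    - f_equal. f_equal. unfold Qw. fold P. rewrite HD0 by lra. unfold a. field. lra.
    - assert (Htt : t < a0 \/ b0 < t) by lra.
      assert (HZ := Zr_t Ur Ui D Rr K a0 b0 d1 d2 Hsupp t x Htt).
      repeat first [rewrite (proj1 (HZ _ _)) | rewrite (proj2 (HZ _ _))]. ring. }
  rewrite EL, ER.
  rewrite (iint_eq _ K HK (gc_Ef Ur Ui D a Rr K a0 b0 d1 d2 HUr HUi HPhi Ha0 Hb0 Hsupp m)).
  2: { intros t x Hx. assert (HZ := Zr_x Ur Ui D Rr K a0 b0 d1 d2 Hsupp t x Hx). unfold Ef.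
       repeat first [rewrite (proj1 (HZ _ _)) | rewrite (proj2 (HZ _ _))]. ring. }
  rewrite (iint_eq _ K HK (gc_Nu Ur Ui D a Rr K a0 b0 d1 d2 HUr HUi HPhi Ha0 Hb0 Hsupp)).
  2: { intros t x Hx. assert (HZ := Zr_x Ur Ui D Rr K a0 b0 d1 d2 Hsupp t x Hx). unfold Nu, u2.
       repeat first [rewrite (proj1 (HZ _ _)) | rewrite (proj2 (HZ _ _))]. ring. }
  assert (HN : 0 <= RInt (fun t => RInt (Nu Ur Ui D a Rr t) (-K) K) 0 1).
  { apply RInt_ge0. lra. apply cts_exRInt. intros t. apply Icont. auto. apply gc_Nu with (K:=K) (a0:=a0) (b0:=b0) (d1:=d1) (d2:=d2); auto.
    intros t _. apply RInt_ge0. lra. apply cts_exRInt. intros x. apply c2_x.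
    apply gc_Nu with (K:=K) (a0:=a0) (b0:=b0) (d1:=d1) (d2:=d2); auto.
    intros x _. unfold Nu, u2. apply Rmult_le_pos. left; apply wt_pos. apply Rplus_le_le_0_compat; apply pow2_ge_0. }
  unfold rr, Ce in Main. replace (pred (nn m)) with k in Main by (unfold k, nn; lia).
  assert (Main2 : (a / 2 * (a ^ 2 * (Rr * d1) ^ 2 - a) ^ k - 2 * (Rr * M2) * (a * (Rr * d2))) *
     RInt (fun t => RInt (Nu Ur Ui D a Rr t) (-K) K) 0 1 >= KK / 2 * g ^ (4 * m - 1) * P *
     RInt (fun t => RInt (Nu Ur Ui D a Rr t) (-K) K) 0 1).
  { apply Rle_ge, Rmult_le_compat_r; auto. lra. }
  lra.
Qed.
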